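(* Let $u,\phi_1,\dots,\phi_N$ be a solution of the $n$-th KdV equation with self-consistent sources of degree $N$ (with distinct constants $\lambda_1,\dots,\lambda_N$ and constant $\alpha$). Fix a constant $\eta$, and let $f_1$ satisfy the Lax pair $$f_{1,xx}+(\xi_1+u)f_1=0,\qquad f_{1,t}=Q^{(n,N)}f_1$$ with spectral parameter $\lambda=\xi_1$. For any $\psi$ satisfying the Lax pair $\psi_{xx}+(\lambda+u)\psi=0$, $\psi_t=Q^{(n,N)}\psi$ with spectral parameter $\lambda$ (and the same $\eta$), define the Darboux transformation $$\bar\psi=\psi_x-\frac{f_{1,x}}{f_1}\psi,\qquad \bar u=u+2\partial^2\ln f_1,\qquad \bar\phi_j=\frac{1}{\sqrt{\lambda_j-\xi_1}}\Big[\phi_{j,x}-\frac{f_{1,x}}{f_1}\phi_j\Big],\quad j=1,\dots,N.$$ Then $$\bar\psi_{xx}+(\lambda+\bar u)\bar\psi=0,\qquad \bar\psi_t=A^{(n)}(\bar u,\lambda)\bar\psi+\eta\bar\psi+\alpha\sum_{j=1}^N\bar\phi_j\,\partial^{-1}(\bar\phi_j\bar\psi),$$ and $\bar u,\bar\phi_1,\dots,\bar\phi_N$ satisfy the $n$-th KdV equation with self-consistent sources of degree $N$: $$\bar u_t=\partial\Big[-2b_{n+2}[\bar u]-2\alpha\sum_{j=1}^N\bar\phi_j^2\Big],\qquad \bar\phi_{j,xx}+(\lambda_j+\bar u)\bar\phi_j=0,\ j=1,\dots,N.$$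
   Context: Let $\partial=\partial/\partial x$ and $\partial^{-1}=\int_{-\infty}^x\cdot\,dx$, so $\partial\partial^{-1}=\partial^{-1}\partial=1$; all functions of $(x,t)$ are smooth and decay as $x\to-\infty$ sufficiently fast that all integrals $\partial^{-1}(\cdot)$ appearing converge (in particular products of eigenfunctions such as $\phi_j\psi$ decay at $x=-\infty$). For a potential $u(x,t)$ let $L=-\frac14\partial^2-u+\frac12\partial^{-1}u_x$, and define $b_0=0$, $b_1=1$, $b_{k+1}=Lb_k$ for $k\ge1$ (so $b_{k+1}=-\frac12L^{k-1}u$), $a_k=-\frac12 b_{k,x}$ for $k\ge0$; write $b_k[u]$ to indicate dependence on $u$. Fix an integer $n\ge0$ and write $t=t_n$. Define the differential operator $A^{(n)}(u,\lambda)=\sum_{i=0}^{n+1}(a_i+b_i\partial)\lambda^{n+1-i}$. The $n$-th KdV equation with self-consistent sources of degree $N$ (constant $\alpha$, distinct constants $\lambda_j$) is the system $u_t=\partial\big[-2b_{n+2}[u]-2\alpha\sum_{j=1}^N\phi_j^2\big]$, $\phi_{j,xx}+(\lambda_j+u)\phi_j=0$, $j=1,\dots,N$. For a constant $\eta$ and spectral parameter $\lambda$, $Q^{(n,N)}$ denotes the operator $Q^{(n,N)}\psi=A^{(n)}(u,\lambda)\psi+\eta\psi+\alpha\sum_{j=1}^N\phi_j\,\partial^{-1}(\phi_j\psi)$. *)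

(* Defs.v *)
(* Functions of (x,t) are complex valued:
   fn := R -> R -> C  with argument order  f x t. *)
From Stdlib Require Import Reals.
From Coquelicot Require Export Coquelicot.

Open Scope C_scope.

Definition fn := R -> R -> C.

Definition Dr (g : R -> C) (x : R) : C :=
  (Derive (fun y => fst (g y)) x, Derive (fun y => snd (g y)) x).

Definition dx (f : fn) : fn := fun x t => Dr (fun y => f y t) x.
Definition dt (f : fn) : fn := fun x t => Dr (fun s => f x s) t.

(* \partial^{-1} f (x,t) = \int_{-\infty}^x f(y,t) dy (improper Riemann integral) *)
Definition pinv (f : fn) : fn :=
  fun x t => @RInt_gen C_R_CompleteNormedModule (fun y => f y t) (Rbar_locally m_infty) (at_point x).

Definition pinv_conv (f : fn) : Prop :=
  forall x t, @ex_RInt_gen C_R_NormedModule (fun y => f y t) (Rbar_locally m_infty) (at_point x).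

Fixpoint iterD (s : list bool) (f : fn) : fn :=
  match s with
  | nil => f
  | cons b s' => (if b then dt else dx) (iterD s' f)
  end.

Definition smooth (f : fn) : Prop :=
  forall s, forall x t,
    ex_derive (fun y => fst (iterD s f y t)) x /\
    ex_derive (fun y => snd (iterD s f y t)) x /\
    ex_derive (fun r => fst (iterD s f x r)) t /\
    ex_derive (fun r => snd (iterD s f x r)) t /\
    continuity_2d_pt (fun a b => fst (iterD s f a b)) x t /\
    continuity_2d_pt (fun a b => snd (iterD s f a b)) x t.

Definition decays (f : fn) : Prop :=
  forall s t,
    is_lim (fun x => fst (iterD s f x t)) m_infty 0%R /\
    is_lim (fun x => snd (iterD s f x t)) m_infty 0%R.

Definition cst (c : C) : fn := fun _ _ => c.

Fixpoint csum (n : nat) (F : nat -> C) : C :=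
  match n with
  | O => 0
  | S m => csum m F + F m
  end.

Fixpoint cpow (z : C) (k : nat) : C :=
  match k with
  | O => 1
  | S m => z * cpow z m
  end.

Definition Lop (u b : fn) : fn :=
  fun x t => - (1/4) * dx (dx b) x t - u x t * b x t
             + (1/2) * pinv (fun y s => dx u y s * b y s) x t.

Fixpoint bseq (u : fn) (k : nat) : fn :=
  match k with
  | O => cst 0
  | S k' => match k' with
            | O => cst 1
            | S _ => Lop u (bseq u k')
            end
  end.

Definition aseq (u : fn) (k : nat) : fn := fun x t => - (1/2) * dx (bseq u k) x t.

Definition Aop (n : nat) (u : fn) (lam : C) (psi : fn) : fn :=
  fun x t => csum (n + 2)
    (fun i => (aseq u i x t * psi x t + bseq u i x t * dx psi x t)
              * cpow lam (n + 1 - i)).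

(* Q^{(n,N)} psi = A^{(n)}(u,lam) psi + eta psi + alpha sum_j phi_j d^{-1}(phi_j psi);
   the sources are phi 0, ..., phi (N-1) *)
Definition Qop (n N : nat) (alpha eta : C) (u : fn) (phi : nat -> fn)
  (lam : C) (psi : fn) : fn :=
  fun x t => Aop n u lam psi x t + eta * psi x t
    + alpha * csum N (fun j => phi j x t * pinv (fun y s => phi j y s * psi y s) x t).

Definition KdVSCS (n N : nat) (alpha : C) (lams : nat -> C) (u : fn) (phi : nat -> fn) : Prop :=
  (forall x t, dt u x t =
     dx (fun y s => - 2 * bseq u (n + 2) y s
                    - 2 * alpha * csum N (fun j => phi j y s * phi j y s)) x t) /\
  (forall j, (j < N)%nat -> forall x t,
     dx (dx (phi j)) x t + (lams j + u x t) * phi j x t = 0).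

Definition LaxPair (n N : nat) (alpha eta : C) (u : fn) (phi : nat -> fn)
  (lam : C) (psi : fn) : Prop :=
  (forall x t, dx (dx psi) x t + (lam + u x t) * psi x t = 0) /\
  (forall x t, dt psi x t = Qop n N alpha eta u phi lam psi x t).

Definition dbar (f1 g : fn) : fn := fun x t => dx g x t - (dx f1 x t / f1 x t) * g x t.
(* u + 2 d^2 ln f1 = u + 2 d (f1_x / f1) *)
Definition ubar (u f1 : fn) : fn :=
  fun x t => u x t + 2 * dx (fun y s => dx f1 y s / f1 y s) x t.
(* phibar_j = (1 / r_j) [phi_{j,x} - f1_x/f1 phi_j], r_j a square root of lam_j - xi1 *)
Definition phibar (f1 : fn) (r : nat -> C) (phi : nat -> fn) (j : nat) : fn :=
  fun x t => / r j * dbar f1 (phi j) x t.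

(* Main.v *)
Require Import Defs.
From Stdlib Require Import Reals Lra Lia FunctionalExtensionality List.
From Coquelicot Require Import Coquelicot.
Open Scope C_scope.

Lemma isd_eq (f : R -> R) (x l l' : R) : is_derive f x l -> @eq R l l' -> is_derive f x l'.
Proof. intros H ->; exact H. Qed.

Lemma isd_const (c : R) x : is_derive (fun _ => c) x 0%R.
Proof. apply (is_derive_const c x). Qed.

Lemma isd_plus (f g : R -> R) x df dg :
  is_derive f x df -> is_derive g x dg -> is_derive (fun y => f y + g y)%R x (df + dg)%R.
Proof. intros H1 H2. apply (is_derive_plus f g x df dg H1 H2). Qed.

Lemma isd_opp (f : R -> R) x df :
  is_derive f x df -> is_derive (fun y => - f y)%R x (- df)%R.
Proof. intros H1. apply (is_derive_opp f x df H1). Qed.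

Lemma isd_minus (f g : R -> R) x df dg :
  is_derive f x df -> is_derive g x dg -> is_derive (fun y => f y - g y)%R x (df - dg)%R.
Proof. intros H1 H2. apply (is_derive_minus f g x df dg H1 H2). Qed.

Lemma isd_mult (f g : R -> R) x df dg :
  is_derive f x df -> is_derive g x dg -> is_derive (fun y => f y * g y)%R x (df * g x + f x * dg)%R.
Proof.
  intros H1 H2. eapply isd_eq. apply (is_derive_mult f g x df dg H1 H2).
  intros; apply Rmult_comm. simpl. unfold mult, plus; simpl. ring.
Qed.

Lemma isd_inv (f : R -> R) x df :
  is_derive f x df -> f x <> 0%R -> is_derive (fun y => / f y)%R x (- df / (f x * f x))%R.
Proof.
  intros H1 H2. eapply isd_eq. apply (is_derive_inv f x df H1 H2).
  simpl. unfold scal, mult; simpl. unfold mult; simpl. field. auto.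
Qed.

Lemma sq_nz p q : (p * p + q * q)%R <> 0%R ->
  ((p * p - q * q) * (p * p - q * q) + (p * q + q * p) * (p * q + q * p))%R <> 0%R.
Proof.
  intros H E. apply H.
  assert (H4 : ((p*p-q*q)*(p*p-q*q) + (p*q+q*p)*(p*q+q*p) = (p*p+q*q)*(p*p+q*q))%R) by ring.
  rewrite H4 in E. apply Rmult_integral in E. tauto.
Qed.

Definition CD (h h' : R -> C) : Prop := forall x,
  is_derive (fun y => fst (h y)) x (fst (h' x)) /\
  is_derive (fun y => snd (h y)) x (snd (h' x)).

Lemma CD_Dr h h' : CD h h' -> forall x, Dr h x = h' x.
Proof.
  intros H x. destruct (H x) as [H1 H2]. unfold Dr.
  transitivity (fst (h' x), snd (h' x)); [|destruct (h' x); reflexivity].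
  f_equal; apply is_derive_unique; auto.
Qed.

Lemma CD_Drf h h' : CD h h' -> Dr h = h'.
Proof. intros H; apply functional_extensionality; apply CD_Dr; auto. Qed.

Lemma CD_ext h d d' : CD h d -> (forall x, d x = d' x) -> CD h d'.
Proof. intros H E x. rewrite <- E. apply H. Qed.

Lemma CD_ext_l h h2 d : CD h d -> (forall x, h x = h2 x) -> CD h2 d.
Proof. intros H E. replace h2 with h. auto. apply functional_extensionality; auto. Qed.

Lemma CD_const (c : C) : CD (fun _ => c) (fun _ => 0).
Proof. intros x; split; simpl; apply isd_const. Qed.

Lemma CD_plus a b a' b' : CD a a' -> CD b b' ->
  CD (fun x => a x + b x) (fun x => a' x + b' x).
Proof. intros H1 H2 x; destruct (H1 x), (H2 x); split; simpl; apply isd_plus; auto. Qed.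

Lemma CD_opp a a' : CD a a' -> CD (fun x => - a x) (fun x => - a' x).
Proof. intros H1 x; destruct (H1 x); split; simpl; apply isd_opp; auto. Qed.

Lemma CD_minus a b a' b' : CD a a' -> CD b b' ->
  CD (fun x => a x - b x) (fun x => a' x - b' x).
Proof. intros H1 H2 x; destruct (H1 x), (H2 x); split; simpl; apply isd_plus; auto; apply isd_opp; auto. Qed.

Lemma CD_mult a b a' b' : CD a a' -> CD b b' ->
  CD (fun x => a x * b x) (fun x => a' x * b x + a x * b' x).
Proof.
  intros H1 H2 x; destruct (H1 x) as [A1 A2], (H2 x) as [B1 B2]; split; simpl.
  - eapply isd_eq. apply isd_minus; apply isd_mult; eauto. cbv beta; ring.
  - eapply isd_eq. apply isd_plus; apply isd_mult; eauto. cbv beta; ring.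
Qed.

Lemma CD_inv a a' : CD a a' -> (forall x, a x <> 0) ->
  CD (fun x => / a x) (fun x => - a' x / (a x * a x)).
Proof.
  intros H1 Hnz x; destruct (H1 x) as [A1 A2].
  assert (Hq : (fst (a x) * fst (a x) + snd (a x) * snd (a x) <> 0)%R).
  { intro E. apply (Hnz x). destruct (a x) as [p q]; simpl in *.
    assert (p = 0%R) by nra. assert (q = 0%R) by nra. subst. reflexivity. }
  assert (Hq' : forall y, (fst (a y) ^ 2 + snd (a y) ^ 2)%R = (fst (a y) * fst (a y) + snd (a y) * snd (a y))%R).
  { intros; ring. }
  split.
  - apply (is_derive_ext (fun y => fst (a y) * / (fst (a y) * fst (a y) + snd (a y) * snd (a y)))%R).
    { intro y. simpl. unfold Rdiv. f_equal. f_equal. ring. }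
    eapply isd_eq. apply isd_mult. eauto. apply isd_inv. apply isd_plus; apply isd_mult; eauto. auto.
    cbv beta. destruct (a x) as [p q], (a' x) as [p' q']; simpl in *.
    field. split; [apply sq_nz; auto | auto].
  - apply (is_derive_ext (fun y => - snd (a y) * / (fst (a y) * fst (a y) + snd (a y) * snd (a y)))%R).
    { intro y. simpl. unfold Rdiv. f_equal. f_equal. ring. }
    eapply isd_eq. apply isd_mult. apply isd_opp; eauto. apply isd_inv. apply isd_plus; apply isd_mult; eauto. auto.
    cbv beta. destruct (a x) as [p q], (a' x) as [p' q']; simpl in *.
    field. split; [apply sq_nz; auto | auto].
Qed.
Definition ex1 (h : R -> C) : Prop := forall x,
  ex_derive (fun y => fst (h y)) x /\ ex_derive (fun y => snd (h y)) x.

Lemma ex1_CD h : ex1 h -> CD h (Dr h).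
Proof.
  intros H x. destruct (H x) as [H1 H2]. unfold Dr; simpl.
  split; apply Derive_correct; auto.
Qed.

Lemma CD_ex1 h d : CD h d -> ex1 h.
Proof. intros H x; destruct (H x); split; eexists; eauto. Qed.

Fixpoint Dn (m : nat) (h : R -> C) : R -> C :=
  match m with O => h | S m' => Dn m' (Dr h) end.

Lemma Dn_S m : forall h, Dn (S m) h = Dr (Dn m h).
Proof. induction m; intros h; simpl; auto. rewrite <- IHm. reflexivity. Qed.

Definition Sm (h : R -> C) : Prop := forall m, ex1 (Dn m h).

Lemma Dr_plus a b : ex1 a -> ex1 b -> Dr (fun x => a x + b x) = (fun x => Dr a x + Dr b x).
Proof. intros; apply CD_Drf, CD_plus; apply ex1_CD; auto. Qed.
Lemma Dr_mult a b : ex1 a -> ex1 b -> Dr (fun x => a x * b x) = (fun x => Dr a x * b x + a x * Dr b x).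
Proof. intros; apply CD_Drf, CD_mult; apply ex1_CD; auto. Qed.

Lemma ex1_plus a b : ex1 a -> ex1 b -> ex1 (fun x => a x + b x).
Proof. intros; eapply CD_ex1, CD_plus; apply ex1_CD; eauto. Qed.
Lemma ex1_mult a b : ex1 a -> ex1 b -> ex1 (fun x => a x * b x).
Proof. intros; eapply CD_ex1, CD_mult; apply ex1_CD; eauto. Qed.

Lemma Dn_plus k : forall a b, (forall j, (j < k)%nat -> ex1 (Dn j a)) ->
  (forall j, (j < k)%nat -> ex1 (Dn j b)) ->
  Dn k (fun x => a x + b x) = (fun x => Dn k a x + Dn k b x).
Proof.
  induction k; intros a b Ha Hb; simpl; auto.
  rewrite Dr_plus by (apply (Ha 0%nat) || apply (Hb 0%nat); lia).
  apply IHk; intros j Hj; [apply (Ha (S j)) | apply (Hb (S j))]; lia.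
Qed.

Lemma prod_gen (Pa Pb Pc : (R -> C) -> Prop) :
  (forall a b, Pa a -> Pb b -> Pc (fun x => a x * b x)) ->
  (forall p q, Pc p -> Pc q -> Pc (fun x => p x + q x)) ->
  forall k a b, (forall j, (j <= k)%nat -> ex1 (Dn j a) /\ Pa (Dn j a)) ->
  (forall j, (j <= k)%nat -> ex1 (Dn j b) /\ Pb (Dn j b)) ->
  forall j, (j <= k)%nat -> ex1 (Dn j (fun x => a x * b x)) /\ Pc (Dn j (fun x => a x * b x)).
Proof.
  intros Hm Hp. induction k; intros a b Ha Hb j Hj.
  - assert (j = 0%nat) by lia; subst. simpl.
    destruct (Ha 0%nat) as [A1 A2]; [lia|]. destruct (Hb 0%nat) as [B1 B2]; [lia|].
    split; [apply ex1_mult|apply Hm]; auto.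
  - destruct j as [|j].
    + simpl. destruct (Ha 0%nat) as [A1 A2]; [lia|]. destruct (Hb 0%nat) as [B1 B2]; [lia|].
      split; [apply ex1_mult|apply Hm]; auto.
    + simpl. destruct (Ha 0%nat) as [A1 _]; [lia|]. destruct (Hb 0%nat) as [B1 _]; [lia|].
      rewrite Dr_mult by auto.
      assert (I1 : forall i, (i <= k)%nat -> ex1 (Dn i (fun x => Dr a x * b x)) /\ Pc (Dn i (fun x => Dr a x * b x))).
      { apply IHk. intros i Hi. apply (Ha (S i)); lia. intros i Hi; apply Hb; lia. }
      assert (I2 : forall i, (i <= k)%nat -> ex1 (Dn i (fun x => a x * Dr b x)) /\ Pc (Dn i (fun x => a x * Dr b x))).
      { apply IHk. intros i Hi; apply Ha; lia. intros i Hi. apply (Hb (S i)); lia. }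
      rewrite Dn_plus.
      * destruct (I1 j), (I2 j); try lia. split; [apply ex1_plus|apply Hp]; auto.
      * intros i Hi; apply I1; lia.
      * intros i Hi; apply I2; lia.
Qed.

Lemma Sm_mult a b : Sm a -> Sm b -> Sm (fun x => a x * b x).
Proof.
  intros Ha Hb m.
  destruct (prod_gen (fun _ => True) (fun _ => True) (fun _ => True)) with (k := m) (a := a) (b := b) (j := m); auto.
Qed.

Lemma Sm_plus a b : Sm a -> Sm b -> Sm (fun x => a x + b x).
Proof.
  intros Ha Hb m. rewrite Dn_plus by auto. apply ex1_plus; auto.
Qed.

Lemma Dn_const m (c : C) : Dn m (fun _ => c) = fun _ => (match m with O => c | _ => 0 end).
Proof.
  induction m; simpl; auto. rewrite (CD_Drf _ _ (CD_const c)).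
  clear IHm. induction m; simpl; auto. rewrite (CD_Drf _ _ (CD_const 0)). auto.
Qed.

Lemma Sm_const c : Sm (fun _ => c).
Proof. intros m; rewrite Dn_const. apply (CD_ex1 _ _ (CD_const _)). Qed.

Lemma Sm_scal c a : Sm a -> Sm (fun x => c * a x).
Proof. intros; apply Sm_mult; auto; apply Sm_const. Qed.

Lemma Sm_opp a : Sm a -> Sm (fun x => - a x).
Proof.
  intros H. replace (fun x => - a x) with (fun x => (-1) * a x). apply Sm_scal; auto.
  apply functional_extensionality; intros; ring.
Qed.

Lemma Sm_minus a b : Sm a -> Sm b -> Sm (fun x => a x - b x).
Proof. intros; unfold Cminus; apply Sm_plus; auto; apply Sm_opp; auto. Qed.

Lemma Sm_Dr a : Sm a -> Sm (Dr a).
Proof. intros H m. exact (H (S m)). Qed.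

Lemma Sm_CD a d : Sm a -> CD a d -> Sm d.
Proof. intros H1 H2. rewrite <- (CD_Drf _ _ H2). apply Sm_Dr; auto. Qed.

Lemma Sm_from_CD a d : CD a d -> Sm d -> Sm a.
Proof. intros H1 H2 m. destruct m. apply (CD_ex1 _ _ H1). simpl. rewrite (CD_Drf _ _ H1). apply H2. Qed.
Definition t0 (h : R -> C) : Prop :=
  forall eps, (0 < eps)%R -> exists X, forall x, (x < X)%R -> (Cmod (h x) < eps)%R.
Definition bnd (h : R -> C) : Prop :=
  exists M X, forall x, (x < X)%R -> (Cmod (h x) <= M)%R.

Lemma Rmin_lt x a b : (x < Rmin a b)%R -> (x < a)%R /\ (x < b)%R.
Proof. intros H; pose proof (Rmin_l a b); pose proof (Rmin_r a b); split; lra. Qed.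

Lemma t0_bnd h : t0 h -> bnd h.
Proof. intros H. destruct (H 1%R Rlt_0_1) as [X HX]. exists 1%R, X. intros; apply Rlt_le; auto. Qed.

Lemma bnd_const c : bnd (fun _ => c).
Proof. exists (Cmod c), 0%R. intros; lra. Qed.

Lemma bnd_ge0 h : bnd h -> exists M X, (0 < M)%R /\ forall x, (x < X)%R -> (Cmod (h x) <= M)%R.
Proof.
  intros [M [X H]]. exists (Rabs M + 1)%R, X. split. pose proof (Rabs_pos M); lra.
  intros x Hx. specialize (H x Hx). pose proof (Rle_abs M). lra.
Qed.

Lemma t0_plus a b : t0 a -> t0 b -> t0 (fun x => a x + b x).
Proof.
  intros Ha Hb e He. destruct (Ha (e/2)%R) as [X1 H1]; [lra|]. destruct (Hb (e/2)%R) as [X2 H2]; [lra|].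
  exists (Rmin X1 X2). intros x Hx. pose proof (Cmod_triangle (a x) (b x)).
  destruct (Rmin_lt _ _ _ Hx) as [Hx1 Hx2].
  specialize (H1 x Hx1); specialize (H2 x Hx2). lra.
Qed.

Lemma bnd_plus a b : bnd a -> bnd b -> bnd (fun x => a x + b x).
Proof.
  intros [M1 [X1 H1]] [M2 [X2 H2]]. exists (M1 + M2)%R, (Rmin X1 X2). intros x Hx.
  pose proof (Cmod_triangle (a x) (b x)).
  destruct (Rmin_lt _ _ _ Hx) as [Hx1 Hx2].
  specialize (H1 x Hx1); specialize (H2 x Hx2). lra.
Qed.

Lemma bnd_mult a b : bnd a -> bnd b -> bnd (fun x => a x * b x).
Proof.
  intros Ha Hb. destruct (bnd_ge0 _ Ha) as [M1 [X1 [P1 H1]]]. destruct (bnd_ge0 _ Hb) as [M2 [X2 [P2 H2]]].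
  exists (M1 * M2)%R, (Rmin X1 X2). intros x Hx. rewrite Cmod_mult.
  destruct (Rmin_lt _ _ _ Hx) as [Hx1 Hx2].
  specialize (H1 x Hx1); specialize (H2 x Hx2). pose proof (Cmod_ge_0 (a x)); pose proof (Cmod_ge_0 (b x)).
  apply Rmult_le_compat; auto.
Qed.

Lemma t0_mult a b : bnd a -> t0 b -> t0 (fun x => a x * b x).
Proof.
  intros Ha Hb e He. destruct (bnd_ge0 _ Ha) as [M1 [X1 [P1 H1]]].
  destruct (Hb (e / M1)%R) as [X2 H2]. apply Rdiv_lt_0_compat; auto.
  exists (Rmin X1 X2). intros x Hx. rewrite Cmod_mult.
  destruct (Rmin_lt _ _ _ Hx) as [Hx1 Hx2].
  specialize (H1 x Hx1); specialize (H2 x Hx2). pose proof (Cmod_ge_0 (a x)); pose proof (Cmod_ge_0 (b x)).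
  apply Rle_lt_trans with (M1 * Cmod (b x))%R. apply Rmult_le_compat_r; auto.
  replace e with (M1 * (e / M1))%R by (field; lra). apply Rmult_lt_compat_l; auto.
Qed.

Lemma t0_mult_r a b : t0 a -> bnd b -> t0 (fun x => a x * b x).
Proof.
  intros Ha Hb. replace (fun x => a x * b x) with (fun x => b x * a x).
  apply t0_mult; auto. apply functional_extensionality; intros; ring.
Qed.

Lemma t0_ext a b : t0 a -> (forall x, a x = b x) -> t0 b.
Proof. intros H E e He. destruct (H e He) as [X HX]. exists X; intros; rewrite <- E; auto. Qed.
Lemma bnd_ext a b : bnd a -> (forall x, a x = b x) -> bnd b.
Proof. intros [M [X H]] E. exists M, X; intros; rewrite <- E; auto. Qed.

Lemma t0_zero : t0 (fun _ => 0).
Proof. intros e He. exists 0%R. intros. rewrite Cmod_0. auto. Qed.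

Definition Good (h : R -> C) : Prop := Sm h /\ forall j, t0 (Dn j h).
Definition Bd (h : R -> C) : Prop := Sm h /\ forall j, bnd (Dn j h).

Lemma Good_Bd h : Good h -> Bd h.
Proof. intros [H1 H2]; split; auto. intros j; apply t0_bnd; auto. Qed.

Lemma Good_mult a b : Bd a -> Good b -> Good (fun x => a x * b x).
Proof.
  intros [Sa Ba] [Sb Gb]. split. apply Sm_mult; auto. intros j.
  destruct (prod_gen bnd t0 t0) with (k := j) (a := a) (b := b) (j := j); auto.
  - intros; apply t0_mult; auto.
  - intros; apply t0_plus; auto.
Qed.

Lemma Bd_mult a b : Bd a -> Bd b -> Bd (fun x => a x * b x).
Proof.
  intros [Sa Ba] [Sb Gb]. split. apply Sm_mult; auto. intros j.
  destruct (prod_gen bnd bnd bnd) with (k := j) (a := a) (b := b) (j := j); auto.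
  - intros; apply bnd_mult; auto.
  - intros; apply bnd_plus; auto.
Qed.

Lemma Good_plus a b : Good a -> Good b -> Good (fun x => a x + b x).
Proof.
  intros [Sa Ga] [Sb Gb]. split. apply Sm_plus; auto. intros j. rewrite Dn_plus by auto.
  apply t0_plus; auto.
Qed.

Lemma Bd_plus a b : Bd a -> Bd b -> Bd (fun x => a x + b x).
Proof.
  intros [Sa Ga] [Sb Gb]. split. apply Sm_plus; auto. intros j. rewrite Dn_plus by auto.
  apply bnd_plus; auto.
Qed.

Lemma Bd_const c : Bd (fun _ => c).
Proof. split. apply Sm_const. intros j. rewrite Dn_const. apply bnd_const. Qed.

Lemma Good_scal c b : Good b -> Good (fun x => c * b x).
Proof. intros; apply Good_mult; auto; apply Bd_const. Qed.
Lemma Bd_scal c b : Bd b -> Bd (fun x => c * b x).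
Proof. intros; apply Bd_mult; auto; apply Bd_const. Qed.

Lemma Good_opp a : Good a -> Good (fun x => - a x).
Proof.
  intros H. replace (fun x => - a x) with (fun x => (-1) * a x). apply Good_scal; auto.
  apply functional_extensionality; intros; ring.
Qed.
Lemma Bd_opp a : Bd a -> Bd (fun x => - a x).
Proof.
  intros H. replace (fun x => - a x) with (fun x => (-1) * a x). apply Bd_scal; auto.
  apply functional_extensionality; intros; ring.
Qed.
Lemma Good_minus a b : Good a -> Good b -> Good (fun x => a x - b x).
Proof. intros; unfold Cminus; apply Good_plus; auto; apply Good_opp; auto. Qed.
Lemma Bd_minus a b : Bd a -> Bd b -> Bd (fun x => a x - b x).
Proof. intros; unfold Cminus; apply Bd_plus; auto; apply Bd_opp; auto. Qed.

Lemma Good_Dr a : Good a -> Good (Dr a).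
Proof. intros [HS G]; split. apply Sm_Dr; auto. intros j. exact (G (S j)). Qed.
Lemma Bd_Dr a : Bd a -> Bd (Dr a).
Proof. intros [HS G]; split. apply Sm_Dr; auto. intros j. exact (G (S j)). Qed.

Lemma Good_CD a d : CD a d -> Good d -> t0 a -> Good a.
Proof.
  intros H1 [HS G] T. split. eapply Sm_from_CD; eauto.
  intros [|j]; simpl; auto. rewrite (CD_Drf _ _ H1). apply G.
Qed.
Lemma Good_CD' a d : CD a d -> Good a -> Good d.
Proof. intros H1 H2. rewrite <- (CD_Drf _ _ H1). apply Good_Dr; auto. Qed.
Lemma Bd_CD' a d : CD a d -> Bd a -> Bd d.
Proof. intros H1 H2. rewrite <- (CD_Drf _ _ H1). apply Bd_Dr; auto. Qed.

Lemma Good_ext a b : Good a -> (forall x, a x = b x) -> Good b.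
Proof. intros H E. replace b with a; auto. apply functional_extensionality; auto. Qed.
Lemma Bd_ext a b : Bd a -> (forall x, a x = b x) -> Bd b.
Proof. intros H E. replace b with a; auto. apply functional_extensionality; auto. Qed.
Lemma Good_t0 a : Good a -> t0 a.
Proof. intros [_ G]; exact (G 0%nat). Qed.
Lemma Bd_bnd a : Bd a -> bnd a.
Proof. intros [_ G]; exact (G 0%nat). Qed.
Definition PI (h : R -> C) (x : R) : C :=
  @RInt_gen C_R_CompleteNormedModule h (Rbar_locally m_infty) (at_point x).

Lemma cont_comp h : ex1 h -> forall x, continuous (fun y => fst (h y)) x /\ continuous (fun y => snd (h y)) x.
Proof. intros H x; destruct (H x); split; apply (ex_derive_continuous (K:=R_AbsRing) (V:=R_NormedModule)); auto. Qed.

Lemma is_RInt_C (h H : R -> C) a b : CD H h -> ex1 h ->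
  @is_RInt C_R_NormedModule h a b (H b - H a).
Proof.
  intros HD Hc.
  replace (H b - H a) with ((fst (H b) - fst (H a))%R, (snd (H b) - snd (H a))%R).
  2:{ destruct (H b), (H a); simpl. unfold Cminus, Cplus, Copp; simpl. f_equal; ring. }
  apply (is_RInt_fct_extend_pair (U := R_NormedModule) (V := R_NormedModule)).
  - apply (is_RInt_derive (V := R_CompleteNormedModule) (fun y => fst (H y)) (fun y => fst (h y))).
    intros; apply HD. intros; apply cont_comp; auto.
  - apply (is_RInt_derive (V := R_CompleteNormedModule) (fun y => snd (H y)) (fun y => snd (h y))).
    intros; apply HD. intros; apply cont_comp; auto.
Qed.

Lemma PI_eq (h H : R -> C) : CD H h -> ex1 h -> t0 H -> forall x, PI h x = H x.
Proof.
  intros HD Hc HT x. unfold PI. refine (is_RInt_gen_unique (V:=C_R_CompleteNormedModule) (Fa := Rbar_locally m_infty) (Fb := at_point x) h (H x) _).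
  intros P [eps HP]. simpl.
  destruct (HT eps (cond_pos eps)) as [X HX].
  apply (Filter_prod _ _ _ (fun a => (a < X)%R) (fun b => b = x)).
  - exists X; auto.
  - reflexivity.
  - intros a b Ha Hb. simpl. subst b. exists (H x - H a). split.
    apply is_RInt_C; auto.
    apply HP. specialize (HX a Ha).
    pose proof (Rmax_Cmod (H a)).
    assert (E1 : (Rabs (fst (H a)) < eps)%R) by (pose proof (Rmax_l (Rabs (fst (H a))) (Rabs (snd (H a)))); lra).
    assert (E2 : (Rabs (snd (H a)) < eps)%R) by (pose proof (Rmax_r (Rabs (fst (H a))) (Rabs (snd (H a)))); lra).
    split; simpl; unfold ball; simpl; unfold AbsRing_ball, abs, minus, plus, opp; simpl.
    + replace (fst (H x) + - fst (H a) + - fst (H x))%R with (- fst (H a))%R by ring. rewrite Rabs_Ropp; auto.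
    + replace (snd (H x) + - snd (H a) + - snd (H x))%R with (- snd (H a))%R by ring. rewrite Rabs_Ropp; auto.
Qed.

Lemma sqrt2_lt2 : (sqrt 2 < 2)%R.
Proof. rewrite <- (sqrt_square 2) at 2 by lra. apply sqrt_lt_1_alt; lra. Qed.

Lemma ex_RInt_C (h : R -> C) a b : ex1 h -> @ex_RInt C_R_NormedModule h a b.
Proof.
  intros Hc. apply (ex_RInt_fct_extend_pair (U := R_NormedModule) (V := R_NormedModule)).
  - apply (ex_RInt_continuous (V := R_CompleteNormedModule)). intros; apply cont_comp; auto.
  - apply (ex_RInt_continuous (V := R_CompleteNormedModule)). intros; apply cont_comp; auto.
Qed.

Lemma RInt_fst (h : R -> C) a b : ex1 h ->
  fst (@RInt C_R_CompleteNormedModule h a b) = RInt (fun z => fst (h z)) a b.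
Proof.
  intros Hc. symmetry. apply is_RInt_unique.
  apply (is_RInt_fct_extend_fst (U := R_NormedModule) (V := R_NormedModule)).
  apply (RInt_correct (V := C_R_CompleteNormedModule)). apply ex_RInt_C; auto.
Qed.
Lemma RInt_snd (h : R -> C) a b : ex1 h ->
  snd (@RInt C_R_CompleteNormedModule h a b) = RInt (fun z => snd (h z)) a b.
Proof.
  intros Hc. symmetry. apply is_RInt_unique.
  apply (is_RInt_fct_extend_snd (U := R_NormedModule) (V := R_NormedModule)).
  apply (RInt_correct (V := C_R_CompleteNormedModule)). apply ex_RInt_C; auto.
Qed.

Definition PIconv (h : R -> C) : Prop :=
  forall x, @ex_RInt_gen C_R_NormedModule h (Rbar_locally m_infty) (at_point x).

Lemma PI_chasles h : ex1 h -> PIconv h -> forall x y,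
  PI h y = PI h x + @RInt C_R_CompleteNormedModule h x y.
Proof.
  intros Hc Hx x y. unfold PI.
  rewrite <- (RInt_gen_at_point (V := C_R_CompleteNormedModule) h x y) by (apply ex_RInt_C; auto).
  symmetry. apply (RInt_gen_Chasles (V := C_R_CompleteNormedModule) (Fa := Rbar_locally m_infty) (Fc := at_point y) h x).
  apply Hx. apply (ex_RInt_gen_at_point (V := C_R_CompleteNormedModule)). apply ex_RInt_C; auto.
Qed.

Lemma PI_CD h : ex1 h -> PIconv h -> CD (PI h) h.
Proof.
  intros Hc Hx x. split.
  - apply (is_derive_ext (fun y => fst (PI h x) + RInt (fun z => fst (h z)) x y)%R).
    { intros y. rewrite (PI_chasles h Hc Hx x y). rewrite <- RInt_fst by auto. reflexivity. }
    eapply isd_eq. apply isd_plus. apply isd_const.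
    apply (is_derive_RInt (V := R_NormedModule) (fun z => fst (h z)) (RInt (fun z => fst (h z)) x) x x).
    + apply filter_forall. intros b. apply (RInt_correct (V := R_CompleteNormedModule)).
      apply (ex_RInt_continuous (V := R_CompleteNormedModule)). intros; apply cont_comp; auto.
    + apply cont_comp; auto.
    + simpl. ring.
  - apply (is_derive_ext (fun y => snd (PI h x) + RInt (fun z => snd (h z)) x y)%R).
    { intros y. rewrite (PI_chasles h Hc Hx x y). rewrite <- RInt_snd by auto. reflexivity. }
    eapply isd_eq. apply isd_plus. apply isd_const.
    apply (is_derive_RInt (V := R_NormedModule) (fun z => snd (h z)) (RInt (fun z => snd (h z)) x) x x).
    + apply filter_forall. intros b. apply (RInt_correct (V := R_CompleteNormedModule)).
      apply (ex_RInt_continuous (V := R_CompleteNormedModule)). intros; apply cont_comp; auto.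
    + apply cont_comp; auto.
    + simpl. ring.
Qed.

Lemma PI_t0 h : ex1 h -> PIconv h -> t0 (PI h).
Proof.
  intros Hc Hx eps Heps.
  pose proof (RInt_gen_correct (V := C_R_CompleteNormedModule) (Fa := Rbar_locally m_infty) (Fb := at_point 0%R) h (Hx 0%R)) as HI.
  change (is_RInt_gen (V:=C_R_NormedModule) h (Rbar_locally m_infty) (at_point 0%R) (PI h 0%R)) in HI.
  set (I0 := PI h 0%R) in HI.
  assert (He : (0 < eps / 2)%R) by lra.
  specialize (HI (ball I0 (mkposreal _ He))).
  destruct HI as [Q Rr HQ HR HQR].
  { exists (mkposreal _ He). auto. }
  destruct HQ as [M HM]. exists M. intros a Ha.
  destruct (HQR a 0%R (HM a Ha) HR) as [y [Hy Hb]]. simpl in Hy.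
  assert (Ey : y = @RInt C_R_CompleteNormedModule h a 0%R).
  { symmetry. apply (is_RInt_unique (V := C_R_CompleteNormedModule)). exact Hy. }
  assert (EP : PI h a = I0 - y).
  { rewrite Ey. pose proof (PI_chasles h Hc Hx a 0%R) as HC. unfold I0. rewrite HC. ring. }
  rewrite EP. clearbody I0. destruct Hb as [B1 B2]. simpl in B1, B2.
  unfold ball in B1, B2; simpl in B1, B2; unfold AbsRing_ball, abs, minus, plus, opp in B1, B2; simpl in B1, B2.
  eapply Rle_lt_trans. apply Cmod_2Rmax.
  assert (R1 : (Rabs (fst ((I0 - y)%C)) < eps/2)%R).
  { replace (fst ((I0 - y)%C)) with (- (fst y + - fst I0))%R. rewrite Rabs_Ropp; auto. simpl. ring. }
  assert (R2 : (Rabs (snd ((I0 - y)%C)) < eps/2)%R).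
  { replace (snd ((I0 - y)%C)) with (- (snd y + - snd I0))%R. rewrite Rabs_Ropp; auto. simpl. ring. }
  pose proof sqrt2_lt2. pose proof (sqrt_pos 2).
  apply Rle_lt_trans with (sqrt 2 * (eps/2))%R.
  apply Rmult_le_compat_l; auto. apply Rmax_lub; lra.
  nra.
Qed.
Definition sl (f : fn) (t : R) : R -> C := fun y => f y t.

Lemma Dn_sl m : forall f t, Dn m (sl f t) = sl (iterD (repeat false m) f) t.
Proof. induction m; intros f t; auto. rewrite Dn_S, IHm. reflexivity. Qed.

Lemma smooth_Sm f t : smooth f -> Sm (sl f t).
Proof. intros H m. rewrite Dn_sl. intros x. destruct (H (repeat false m) x t) as [A [B _]]. split; auto. Qed.

Lemma islim_eps (h : R -> R) : is_lim h m_infty 0%R ->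
  forall eps, (0 < eps)%R -> exists M, forall x, (x < M)%R -> (Rabs (h x) < eps)%R.
Proof.
  intros H eps He. destruct (H (ball 0%R (mkposreal _ He))) as [M HM].
  { exists (mkposreal _ He); auto. }
  exists M. intros x Hx. specialize (HM x Hx). unfold ball in HM; simpl in HM.
  unfold AbsRing_ball, abs, minus, plus, opp in HM; simpl in HM.
  replace (h x) with (h x + - 0)%R by ring. auto.
Qed.

Lemma t0_of_lims (h : R -> C) : is_lim (fun x => fst (h x)) m_infty 0%R ->
  is_lim (fun x => snd (h x)) m_infty 0%R -> t0 h.
Proof.
  intros H1 H2 eps He.
  destruct (islim_eps _ H1 (eps/2)%R) as [M1 HM1]; [lra|].
  destruct (islim_eps _ H2 (eps/2)%R) as [M2 HM2]; [lra|].
  exists (Rmin M1 M2). intros x Hx. destruct (Rmin_lt _ _ _ Hx) as [Hx1 Hx2].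
  specialize (HM1 x Hx1); specialize (HM2 x Hx2).
  eapply Rle_lt_trans. apply Cmod_2Rmax.
  pose proof sqrt2_lt2. pose proof (sqrt_pos 2).
  apply Rle_lt_trans with (sqrt 2 * (eps/2))%R.
  apply Rmult_le_compat_l; auto. apply Rmax_lub; lra. nra.
Qed.

Lemma decays_Good f t : smooth f -> decays f -> Good (sl f t).
Proof.
  intros H1 H2. split. apply smooth_Sm; auto. intros j. rewrite Dn_sl.
  destruct (H2 (repeat false j) t). apply t0_of_lims; auto.
Qed.

Lemma bnd_of_conv H h : CD H h -> ex1 h -> PIconv h -> bnd H.
Proof.
  intros HD Hc Hx.
  assert (E : forall a, H a = H 0%R - PI h 0%R + PI h a).
  { intros a. rewrite (PI_chasles h Hc Hx a 0%R).
    assert (HR : @RInt C_R_CompleteNormedModule h a 0%R = H 0%R - H a).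
    { apply (is_RInt_unique (V := C_R_CompleteNormedModule)). apply is_RInt_C; auto. }
    rewrite HR. ring. }
  eapply bnd_ext. apply bnd_plus. apply bnd_const. apply t0_bnd. apply PI_t0; [exact Hc|exact Hx].
  intros x; cbv beta; symmetry; apply E.
Qed.

Lemma bnd_sq g : bnd (fun x => g x * g x) -> bnd g.
Proof.
  intros [M [X H]]. exists (Rabs M + 1)%R, X. intros x Hx. specialize (H x Hx).
  rewrite Cmod_mult in H. pose proof (Cmod_ge_0 (g x)). pose proof (Rle_abs M). nra.
Qed.

Definition PU (P : (R -> C) -> Prop) (m : nat) (h : R -> C) : Prop :=
  forall j, (j <= m)%nat -> ex1 (Dn j h) /\ P (Dn j h).

Lemma PU_plus P (HP : forall p q, P p -> P q -> P (fun x => p x + q x)) m a b :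
  PU P m a -> PU P m b -> PU P m (fun x => a x + b x).
Proof.
  intros Ha Hb j Hj. rewrite Dn_plus.
  destruct (Ha j Hj), (Hb j Hj). split; [apply ex1_plus|apply HP]; auto.
  intros; apply Ha; lia. intros; apply Hb; lia.
Qed.

Lemma PU_mult P (HP : forall p q, P p -> P q -> P (fun x => p x + q x))
  (HM : forall p q, P p -> P q -> P (fun x => p x * q x)) m a b :
  PU P m a -> PU P m b -> PU P m (fun x => a x * b x).
Proof. intros Ha Hb j Hj. apply (prod_gen P P P HM HP m); auto. Qed.

Lemma PU_const P (HC : forall c, P (fun _ => c)) m c : PU P m (fun _ => c).
Proof. intros j Hj. rewrite Dn_const. split. apply (CD_ex1 _ _ (CD_const _)). apply HC. Qed.

Lemma PU_le P m m' h : PU P m h -> (m' <= m)%nat -> PU P m' h.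
Proof. intros H Hm j Hj; apply H; lia. Qed.

Lemma ricc P (HP : forall p q, P p -> P q -> P (fun x => p x + q x))
  (HM : forall p q, P p -> P q -> P (fun x => p x * q x))
  (HC : forall c, P (fun _ => c)) (g U : R -> C) (c : C) :
  CD g (fun x => c - U x - g x * g x) -> (forall m, PU P m U) -> P g ->
  forall m, PU P m g.
Proof.
  intros HD HU Pg. induction m.
  - intros j Hj. assert (j = 0%nat) by lia. subst. simpl. split; auto. eapply CD_ex1; eauto.
  - intros [|j] Hj. simpl. split; auto. eapply CD_ex1; eauto.
    simpl. rewrite (CD_Drf _ _ HD).
    assert (PU P m (fun x => c - U x - g x * g x)).
    { unfold Cminus. apply PU_plus; auto. apply PU_plus; auto. apply PU_const; auto.
      replace (fun x => - U x) with (fun x => (-1) * U x). apply PU_mult; auto. apply PU_const; auto.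
      apply functional_extensionality; intros; ring.
      replace (fun x => - (g x * g x)) with (fun x => (-1) * (g x * g x)). apply PU_mult; auto. apply PU_const; auto.
      apply PU_mult; auto. apply functional_extensionality; intros; ring. }
    apply H; lia.
Qed.

Lemma Sm_PU h : Sm h -> forall m, PU (fun _ => True) m h.
Proof. intros H m j _; split; auto. Qed.
Lemma PU_Sm h : (forall m, PU (fun _ => True) m h) -> Sm h.
Proof. intros H m. apply (H m m); lia. Qed.
Lemma Bd_PU h : Bd h -> forall m, PU bnd m h.
Proof. intros [H1 H2] m j _; split; auto. Qed.
Lemma PU_Bd h : (forall m, PU bnd m h) -> Bd h.
Proof. intros H; split. intros m; apply (H m m); lia. intros m; apply (H m m); lia. Qed.
Lemma lim_of_conv H h : CD H h -> ex1 h -> PIconv h -> t0 (fun a => H a - (H 0%R - PI h 0%R)).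
Proof.
  intros HD Hc Hx.
  assert (E : forall a, H a = H 0%R - PI h 0%R + PI h a).
  { intros a. rewrite (PI_chasles h Hc Hx a 0%R).
    assert (HR : @RInt C_R_CompleteNormedModule h a 0%R = H 0%R - H a).
    { apply (is_RInt_unique (V := C_R_CompleteNormedModule)). apply is_RInt_C; auto. }
    rewrite HR. ring. }
  eapply t0_ext. apply PI_t0; [exact Hc|exact Hx]. intros a; cbv beta. rewrite (E a). ring.
Qed.

Lemma real_bnd_deriv (r dr : R -> R) M X c1 :
  (forall x, is_derive r x (dr x)) -> (forall x, (x < X)%R -> (Rabs (r x) <= M)%R) ->
  (forall eps, (0 < eps)%R -> exists Y, forall x, (x < Y)%R -> (Rabs (dr x - c1) < eps)%R) ->
  c1 = 0%R.
Proof.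
  intros Hd Hb Hl. destruct (Req_dec c1 0) as [|Hne]; auto. exfalso.
  set (d := (Rabs c1 / 2)%R). assert (Hdp : (0 < d)%R) by (unfold d; pose proof (Rabs_pos_lt _ Hne); lra).
  destruct (Hl d Hdp) as [Y HY].
  set (x0 := (Rmin X Y - 1)%R).
  assert (Hx0 : (x0 < X)%R /\ (x0 < Y)%R) by (unfold x0; pose proof (Rmin_l X Y); pose proof (Rmin_r X Y); lra).
  set (a := (x0 - (2 * Rabs M + 1) / d)%R).
  assert (Ha : (a < x0)%R).
  { unfold a. assert (0 < (2 * Rabs M + 1) / d)%R. apply Rdiv_lt_0_compat; pose proof (Rabs_pos M); lra. lra. }
  destruct (MVT_abs r dr a x0) as [c [Hc1 Hc2]].
  { intros c Hc. apply is_derive_Reals. apply Hd. }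
  rewrite Rmin_left in Hc2 by lra. rewrite Rmax_right in Hc2 by lra.
  assert (Hdc : (d < Rabs (dr c))%R).
  { assert (c < Y)%R by lra. specialize (HY c H). unfold d in *.
    pose proof (Rabs_triang_inv c1 (dr c)). rewrite Rabs_minus_sym in HY. lra. }
  rewrite (Rabs_right (x0 - a)) in Hc1 by lra.
  assert (E : ((x0 - a) * d = 2 * Rabs M + 1)%R) by (unfold a; field; lra).
  assert (H1 : (Rabs (r x0 - r a) > 2 * Rabs M + 1)%R).
  { rewrite Hc1. rewrite <- E. rewrite Rmult_comm. apply Rmult_lt_compat_l; lra. }
  assert (H2 : (Rabs (r x0) <= M)%R) by (apply Hb; lra).
  assert (H3 : (Rabs (r a) <= M)%R) by (apply Hb; lra).
  pose proof (Rabs_triang (r x0) (- r a)). rewrite Rabs_Ropp in H. pose proof (Rle_abs M).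
  unfold Rminus in H1. lra.
Qed.

Lemma im_le_Cmod (c : C) : (Rabs (snd c) <= Cmod c)%R.
Proof. eapply Rle_trans; [apply Rmax_r|apply Rmax_Cmod]. Qed.

Lemma cplx_bnd_deriv g d c : CD g d -> bnd g -> t0 (fun x => d x - c) -> c = 0.
Proof.
  intros HD [M [X HB]] HT.
  assert (fst c = 0%R).
  { apply (real_bnd_deriv (fun y => fst (g y)) (fun y => fst (d y)) M X); auto.
    intros x; apply HD. intros x Hx. eapply Rle_trans; [apply re_le_Cmod|]. apply HB; auto.
    intros eps He. destruct (HT eps He) as [Y HY]. exists Y. intros x Hx.
    eapply Rle_lt_trans; [|apply (HY x Hx)]. exact (re_le_Cmod (d x - c)). }
  assert (snd c = 0%R).
  { apply (real_bnd_deriv (fun y => snd (g y)) (fun y => snd (d y)) M X); auto.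
    intros x; apply HD. intros x Hx. eapply Rle_trans; [apply im_le_Cmod|]. apply HB; auto.
    intros eps He. destruct (HT eps He) as [Y HY]. exists Y. intros x Hx.
    eapply Rle_lt_trans; [|apply (HY x Hx)]. exact (im_le_Cmod (d x - c)). }
  destruct c; simpl in *; subst; reflexivity.
Qed.

Lemma lin_boot h a c : CD h (fun x => a x + c x * h x) -> Good a -> Bd c -> t0 h -> Good h.
Proof.
  intros HD Ga Bc Th.
  assert (forall m, PU t0 m h).
  { induction m.
    - intros j Hj. assert (j = 0%nat) by lia. subst. simpl. split; auto. eapply CD_ex1; eauto.
    - intros [|j] Hj. simpl. split; auto. eapply CD_ex1; eauto.
      simpl. rewrite (CD_Drf _ _ HD). rewrite Dn_plus.
      + destruct Ga as [Sa Ta].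
        destruct (prod_gen bnd t0 t0) with (k := m) (a := c) (b := h) (j := j) as [E1 E2]; auto.
        * intros; apply t0_mult; auto.
        * intros; apply t0_plus; auto.
        * intros i Hi; split; apply Bc.
        * lia.
        * split. apply ex1_plus; auto. apply t0_plus; auto.
      + intros; apply Ga.
      + intros i Hi. destruct (prod_gen (fun _ => True) (fun _ => True) (fun _ => True)) with (k := m) (a := c) (b := h) (j := i); auto.
        intros i0 Hi0; split; auto. apply Bc. intros i0 Hi0; split; auto. apply IHm; auto. lia. }
  split. intros m; apply (H m m); lia. intros m; apply (H m m); lia.
Qed.
Ltac cd_step := match goal with
  | |- CD (fun x => ?c) _ => apply (CD_const c)
  | |- CD (fun x => @?a x + @?b x) _ => apply (CD_plus a b)
  | |- CD (fun x => @?a x - @?b x) _ => apply (CD_minus a b)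
  | |- CD (fun x => - @?a x) _ => apply (CD_opp a)
  | |- CD (fun x => @?a x * @?b x) _ => apply (CD_mult a b)
  | |- _ => eassumption
  end.
Ltac cd_tac := repeat cd_step.

Definition gq (F : R -> C) : R -> C := fun x => Dr F x / F x.
Definition ubs (U F : R -> C) : R -> C := fun x => U x + 2 * Dr (gq F) x.

Lemma g_CD U F xi : Sm F -> (forall x, F x <> 0) ->
  (forall x, Dr (Dr F) x + (xi + U x) * F x = 0) ->
  CD (gq F) (fun x => - xi - U x - gq F x * gq F x).
Proof.
  intros SF Fnz FS.
  assert (H1 : CD (Dr F) (Dr (Dr F))) by (apply ex1_CD; apply (SF 1%nat)).
  assert (H2 : CD (fun x => / F x) (fun x => - Dr F x / (F x * F x))) by (apply CD_inv; auto; apply ex1_CD; apply (SF 0%nat)).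
  unfold gq, Cdiv. eapply CD_ext. apply CD_mult; eauto.
  intros x; cbv beta. specialize (FS x). specialize (Fnz x).
  replace (Dr (Dr F) x) with (- (xi + U x) * F x) by (rewrite <- (Cplus_0_l (- (xi + U x) * F x)); rewrite <- FS; ring).
  field; auto.
Qed.

Lemma ubs_eq U F xi : Sm F -> (forall x, F x <> 0) ->
  (forall x, Dr (Dr F) x + (xi + U x) * F x = 0) ->
  forall x, ubs U F x = - U x - 2 * xi - 2 * (gq F x * gq F x).
Proof. intros SF Fnz FS x. unfold ubs. rewrite (CD_Dr _ _ (g_CD U F xi SF Fnz FS)). ring. Qed.

Lemma g_Sm U F xi : Sm U -> Sm F -> (forall x, F x <> 0) ->
  (forall x, Dr (Dr F) x + (xi + U x) * F x = 0) -> Sm (gq F).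
Proof.
  intros SU SF Fnz FS. apply PU_Sm. intros m.
  refine (ricc (fun _ => True) _ _ _ (gq F) U (- xi) _ _ _ m); auto.
  apply g_CD; auto. apply Sm_PU; auto.
Qed.

Lemma ubs_Sm U F xi : Sm U -> Sm F -> (forall x, F x <> 0) ->
  (forall x, Dr (Dr F) x + (xi + U x) * F x = 0) -> Sm (ubs U F).
Proof.
  intros SU SF Fnz FS. pose proof (g_Sm U F xi SU SF Fnz FS) as Sg.
  replace (ubs U F) with (fun x => - U x - 2 * xi - 2 * (gq F x * gq F x)).
  apply Sm_minus. apply Sm_minus. apply Sm_opp; auto. apply Sm_const. apply Sm_scal. apply Sm_mult; auto.
  apply functional_extensionality; intros; symmetry; apply (ubs_eq U F xi); auto.
Qed.

Lemma ubs_bnd U F xi : Sm U -> Sm F -> (forall x, F x <> 0) ->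
  (forall x, Dr (Dr F) x + (xi + U x) * F x = 0) ->
  PIconv (fun y => Dr (ubs U F) y * 1) -> bnd (ubs U F).
Proof.
  intros SU SF Fnz FS Hc. pose proof (ubs_Sm U F xi SU SF Fnz FS) as Su.
  apply (bnd_of_conv _ (fun y => Dr (ubs U F) y * 1)); auto.
  eapply CD_ext. apply ex1_CD; apply (Su 0%nat). intros; cbv beta; ring.
  apply ex1_mult. apply (Su 1%nat). apply (CD_ex1 _ _ (CD_const 1)).
Qed.

Lemma g_bnd U F xi : Good U -> Sm F -> (forall x, F x <> 0) ->
  (forall x, Dr (Dr F) x + (xi + U x) * F x = 0) ->
  PIconv (fun y => Dr (ubs U F) y * 1) -> bnd (gq F).
Proof.
  intros GU SF Fnz FS Hc. pose proof (ubs_bnd U F xi (proj1 GU) SF Fnz FS Hc) as B.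
  apply bnd_sq. eapply bnd_ext.
  apply (bnd_mult (fun _ => - / 2)). apply bnd_const.
  apply bnd_plus. apply bnd_plus. exact B. apply Good_Bd in GU. apply (Bd_bnd _ GU). apply (bnd_const (2 * xi)).
  intros x; cbv beta. rewrite (ubs_eq U F xi) by auto. field.
Qed.

Lemma g_Bd U F xi : Good U -> Sm F -> (forall x, F x <> 0) ->
  (forall x, Dr (Dr F) x + (xi + U x) * F x = 0) ->
  PIconv (fun y => Dr (ubs U F) y * 1) -> Bd (gq F).
Proof.
  intros GU SF Fnz FS Hc. apply PU_Bd. intros m.
  refine (ricc bnd _ _ _ (gq F) U (- xi) _ _ _ m).
  - intros; apply bnd_plus; auto.
  - intros; apply bnd_mult; auto.
  - intros; apply bnd_const.
  - apply g_CD; auto.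
  - apply Bd_PU. apply Good_Bd; auto.
  - eapply g_bnd; eauto.
Qed.

Lemma ubs_t0 U F xi : Good U -> Sm F -> (forall x, F x <> 0) ->
  (forall x, Dr (Dr F) x + (xi + U x) * F x = 0) ->
  PIconv (fun y => Dr (ubs U F) y * 1) -> t0 (ubs U F).
Proof.
  intros GU SF Fnz FS Hc. pose proof (ubs_Sm U F xi (proj1 GU) SF Fnz FS) as Su.
  set (L := ubs U F 0%R - PI (fun y => Dr (ubs U F) y * 1) 0%R).
  assert (T1 : t0 (fun a => ubs U F a - L)).
  { apply lim_of_conv; auto.
    eapply CD_ext. apply ex1_CD; apply (Su 0%nat). intros; cbv beta; ring.
    apply ex1_mult. apply (Su 1%nat). apply (CD_ex1 _ _ (CD_const 1)). }
  assert (HL : L / 2 = 0).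
  { apply (cplx_bnd_deriv (gq F) (fun x => - xi - U x - gq F x * gq F x)).
    apply g_CD; auto. eapply g_bnd; eauto.
    eapply t0_ext. apply (t0_mult (fun _ => / 2)). apply bnd_const.
    apply t0_plus. exact T1. apply (t0_mult (fun _ => -1)). apply bnd_const. apply (Good_t0 _ GU).
    intros x; cbv beta. rewrite (ubs_eq U F xi) by (auto; apply GU). field. }
  assert (L = 0). { replace L with (2 * (L / 2)) by field. rewrite HL. ring. }
  eapply t0_ext. exact T1. intros x; cbv beta. rewrite H. ring.
Qed.

Lemma gp_Good U F xi : Good U -> Sm F -> (forall x, F x <> 0) ->
  (forall x, Dr (Dr F) x + (xi + U x) * F x = 0) ->
  PIconv (fun y => Dr (ubs U F) y * 1) -> Good (fun x => - xi - U x - gq F x * gq F x).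
Proof.
  intros GU SF Fnz FS Hc.
  pose proof (g_CD U F xi SF Fnz FS) as Hg.
  assert (HU : CD U (Dr U)) by (apply ex1_CD; apply (proj1 GU 0%nat)).
  apply lin_boot with (a := fun x => - Dr U x) (c := fun x => -2 * gq F x).
  - eapply CD_ext. cd_tac. intros x; cbv beta. ring.
  - apply Good_opp. apply Good_Dr; auto.
  - apply Bd_scal. eapply g_Bd; eauto.
  - eapply t0_ext. apply (t0_mult (fun _ => / 2)). apply bnd_const.
    apply t0_plus. eapply ubs_t0; eauto. apply (t0_mult (fun _ => -1)). apply bnd_const. apply (Good_t0 _ GU).
    intros x; cbv beta. rewrite (ubs_eq U F xi) by (auto; apply GU). field.
Qed.
Lemma Good_mult_r a b : Good a -> Bd b -> Good (fun x => a x * b x).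
Proof.
  intros Ha Hb. replace (fun x => a x * b x) with (fun x => b x * a x).
  apply Good_mult; auto. apply functional_extensionality; intros; ring.
Qed.

Lemma t0_opp a : t0 a -> t0 (fun x => - a x).
Proof. intros H e He. destruct (H e He) as [X HX]. exists X. intros x Hx. rewrite Cmod_opp. auto. Qed.

Lemma Good_zero : Good (fun _ => 0).
Proof.
  split. apply Sm_const. intros j. rewrite Dn_const. destruct j; apply t0_zero.
Qed.

Lemma Dr_const (c : C) : Dr (fun _ => c) = (fun _ => 0).
Proof. apply CD_Drf, CD_const. Qed.

Definition M0 (U B : R -> C) : R -> C :=
  fun x => - (1/4) * Dr (Dr (Dr B)) x - U x * Dr B x - (1/2) * (Dr U x * B x).

Lemma M0_Good U B : Good U -> Bd B -> Good (Dr B) -> Good (M0 U B).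
Proof.
  intros GU BB GB. unfold M0.
  apply Good_minus. apply Good_minus.
  apply Good_scal. apply Good_Dr, Good_Dr; auto.
  apply Good_mult; auto. apply Good_Bd; auto.
  apply Good_scal. apply Good_mult_r; auto. apply Good_Dr; auto.
Qed.

Lemma bfacts n (U : R -> C) (b : nat -> R -> C) :
  Good U -> b 0%nat = (fun _ => 0) -> b 1%nat = (fun _ => 1) ->
  (forall k, (S k <= n + 1)%nat -> b (S (S k)) = fun x => - (1/4) * Dr (Dr (b (S k))) x - U x * b (S k) x
        + (1/2) * PI (fun y => Dr U y * b (S k) y) x) ->
  (forall k, (k <= n + 1)%nat -> PIconv (fun y => Dr U y * b k y)) ->
  forall i, (i <= n + 2)%nat ->
    (Bd (b i) /\ Good (Dr (b i)) /\ ((2 <= i)%nat -> Good (b i))) /\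
    ((i <= n + 1)%nat -> CD (b (S i)) (M0 U (b i))).
Proof.
  intros GU Hb0 Hb1 Hbr Hbc.
  assert (HQ : forall i, (i <= n + 1)%nat -> Bd (b i) -> Good (Dr (b i)) ->
     CD (b (S i)) (M0 U (b i)) /\ ((1 <= i)%nat -> t0 (b (S i)))).
  { intros i Hi BB GB. destruct i as [|k].
    - rewrite Hb1, Hb0. split; [|intros; lia]. eapply CD_ext. apply CD_const.
      intros x. unfold M0. rewrite !Dr_const. ring.
    - assert (HU : CD U (Dr U)) by (apply ex1_CD; apply (proj1 GU 0%nat)).
      assert (H1 : CD (b (S k)) (Dr (b (S k)))) by (apply ex1_CD; apply (proj1 BB 0%nat)).
      assert (H2 : CD (Dr (b (S k))) (Dr (Dr (b (S k))))) by (apply ex1_CD; apply (proj1 BB 1%nat)).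
      assert (H3 : CD (Dr (Dr (b (S k)))) (Dr (Dr (Dr (b (S k)))))) by (apply ex1_CD; apply (proj1 BB 2%nat)).
      assert (Hex : ex1 (fun y => Dr U y * b (S k) y)).
      { apply ex1_mult. apply (proj1 GU 1%nat). apply (proj1 BB 0%nat). }
      assert (H4 : CD (PI (fun y => Dr U y * b (S k) y)) (fun y => Dr U y * b (S k) y)).
      { apply PI_CD; auto. }
      rewrite (Hbr k Hi). split.
      + eapply CD_ext. cd_tac. intros x; cbv beta. unfold M0. field.
      + intros _. apply t0_plus. apply t0_plus.
        apply (t0_mult (fun _ => - (1/4))). apply bnd_const. apply (proj2 GB 1%nat).
        apply t0_opp. apply t0_mult_r. apply (Good_t0 _ GU). apply (Bd_bnd _ BB).
        apply (t0_mult (fun _ => 1/2)). apply bnd_const. apply PI_t0; auto. }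
  induction i; intros Hi.
  - assert (P0 : Bd (b 0%nat) /\ Good (Dr (b 0%nat)) /\ ((2 <= 0)%nat -> Good (b 0%nat))).
    { rewrite Hb0. split. apply Bd_const. split. rewrite Dr_const. apply Good_zero. intros; lia. }
    split; auto. intros Hi'. apply HQ; auto; apply P0.
  - destruct IHi as [[B1 [G1 G2]] Q]; [lia|].
    destruct (HQ i) as [HC HT]; auto; try lia.
    assert (P1 : Bd (b (S i)) /\ Good (Dr (b (S i))) /\ ((2 <= S i)%nat -> Good (b (S i)))).
    { destruct i as [|k].
      - rewrite Hb1. split. apply Bd_const. split. rewrite Dr_const. apply Good_zero. intros; lia.
      - assert (Gb : Good (b (S (S k)))).
        { apply (Good_CD _ _ HC). apply M0_Good; auto. apply HT; lia. }
        split. apply Good_Bd; auto. split. apply Good_Dr; auto. auto. }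
    split; auto. intros Hi'.
    destruct (HQ (S i)) as [HC' _]; auto; apply P1.
Qed.
Fixpoint Dl (U g : R -> C) (b : nat -> R -> C) (xi : C) (i : nat) : R -> C :=
  match i with
  | O => fun _ => 0
  | S k => fun x => xi * Dl U g b xi k x -
       ((- xi - U x - g x * g x) * b k x + g x * Dr (b k) x - (1/2) * Dr (Dr (b k)) x)
  end.

Definition BF n (U : R -> C) (b : nat -> R -> C) : Prop :=
  forall i, (i <= n + 2)%nat ->
    (Bd (b i) /\ Good (Dr (b i)) /\ ((2 <= i)%nat -> Good (b i))) /\
    ((i <= n + 1)%nat -> CD (b (S i)) (M0 U (b i))).

Lemma Dl_facts n U g b xi : Good U -> CD g (fun x => - xi - U x - g x * g x) -> Bd g ->
  Good (fun x => - xi - U x - g x * g x) -> BF n U b -> b 0%nat = (fun _ => 0) ->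
  forall i, (i <= n + 2)%nat ->
    Good (Dl U g b xi i) /\ CD (Dl U g b xi i) (fun x => -2 * Dr (b i) x - 2 * g x * Dl U g b xi i x).
Proof.
  intros GU Hg Bg Ggp HBF Hb0. induction i; intros Hi.
  - simpl. split. apply Good_zero. eapply CD_ext. apply CD_const. intros x. rewrite Hb0, Dr_const. ring.
  - destruct IHi as [GD CDD]; [lia|].
    destruct (HBF i) as [[BB [GB _]] HC]; [lia|]. specialize (HC ltac:(lia)).
    split.
    + simpl. apply Good_minus. apply Good_scal; auto.
      apply Good_minus. apply Good_plus. apply Good_mult_r; auto. apply Good_mult; auto.
      apply Good_scal. apply Good_Dr; auto.
    + assert (HU : CD U (Dr U)) by (apply ex1_CD; apply (proj1 GU 0%nat)).
      assert (H1 : CD (b i) (Dr (b i))) by (apply ex1_CD; apply (proj1 BB 0%nat)).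
      assert (H2 : CD (Dr (b i)) (Dr (Dr (b i)))) by (apply ex1_CD; apply (proj1 BB 1%nat)).
      assert (H3 : CD (Dr (Dr (b i))) (Dr (Dr (Dr (b i))))) by (apply ex1_CD; apply (proj1 BB 2%nat)).
      simpl. eapply CD_ext. cd_tac.
      intros x; cbv beta. rewrite (CD_Dr _ _ HC). unfold M0. field.
Qed.
Lemma ubs_Good U F xi : Good U -> Sm F -> (forall x, F x <> 0) ->
  (forall x, Dr (Dr F) x + (xi + U x) * F x = 0) ->
  PIconv (fun y => Dr (ubs U F) y * 1) -> Good (ubs U F).
Proof.
  intros GU SF Fnz FS Hc. apply (Good_ext (fun x => U x + 2 * (- xi - U x - gq F x * gq F x))).
  apply Good_plus. exact GU. apply Good_scal. eapply gp_Good; eauto.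
  intros x; cbv beta. rewrite (ubs_eq U F xi) by auto. ring.
Qed.

Lemma ubs_CD U F xi : Sm U -> Sm F -> (forall x, F x <> 0) ->
  (forall x, Dr (Dr F) x + (xi + U x) * F x = 0) ->
  CD (ubs U F) (fun x => - Dr U x - 4 * gq F x * (- xi - U x - gq F x * gq F x)).
Proof.
  intros SU SF Fnz FS. pose proof (g_CD U F xi SF Fnz FS) as Hg.
  assert (HU : CD U (Dr U)) by (apply ex1_CD; apply (SU 0%nat)).
  eapply CD_ext_l. 2:{ intros x; symmetry; apply (ubs_eq U F xi); auto. }
  eapply CD_ext. cd_tac. intros x; cbv beta. ring.
Qed.

Lemma Dl_S U g b xi k : Dl U g b xi (S k) = fun x => xi * Dl U g b xi k x -
       ((- xi - U x - g x * g x) * b k x + g x * Dr (b k) x - (1/2) * Dr (Dr (b k)) x).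
Proof. reflexivity. Qed.

Lemma bbar_eq n U F xi (b bb : nat -> R -> C) : Good U -> Sm F -> (forall x, F x <> 0) ->
  (forall x, Dr (Dr F) x + (xi + U x) * F x = 0) ->
  PIconv (fun y => Dr (ubs U F) y * 1) ->
  BF n U b -> b 0%nat = (fun _ => 0) -> b 1%nat = (fun _ => 1) ->
  bb 0%nat = (fun _ => 0) -> bb 1%nat = (fun _ => 1) ->
  (forall k, (S k <= n + 1)%nat -> bb (S (S k)) = fun x => - (1/4) * Dr (Dr (bb (S k))) x
       - ubs U F x * bb (S k) x + (1/2) * PI (fun y => Dr (ubs U F) y * bb (S k) y) x) ->
  forall i, (i <= n + 2)%nat -> bb i = fun x => b i x + Dl U (gq F) b xi i x.
Proof.
  intros GU SF Fnz FS Hc HBF Hb0 Hb1 Hbb0 Hbb1 Hbbr.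
  pose proof (g_CD U F xi SF Fnz FS) as Hg.
  pose proof (g_Bd U F xi GU SF Fnz FS Hc) as Bg.
  pose proof (gp_Good U F xi GU SF Fnz FS Hc) as Ggp.
  pose proof (ubs_Good U F xi GU SF Fnz FS Hc) as GUb.
  pose proof (ubs_CD U F xi (proj1 GU) SF Fnz FS) as HUb.
  pose proof (Dl_facts n U (gq F) b xi GU Hg Bg Ggp HBF Hb0) as HDl.
  assert (HU : CD U (Dr U)) by (apply ex1_CD; apply (proj1 GU 0%nat)).
  induction i; intros Hi.
  - rewrite Hbb0, Hb0. simpl. apply functional_extensionality; intros; ring.
  - destruct i as [|k].
    + rewrite Hbb1, Hb1. apply functional_extensionality; intros x. simpl. rewrite Hb0, !Dr_const. ring.
    + specialize (IHi ltac:(lia)).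
      destruct (HBF (S k)) as [[BB [GB _]] HCB]; [lia|]. specialize (HCB ltac:(lia)).
      destruct (HBF (S (S k))) as [[BB2 [GB2 GB2']] _]; [lia|]. specialize (GB2' ltac:(lia)).
      destruct (HDl (S k)) as [GD HD]; [lia|].
      destruct (HDl (S (S k))) as [GD2 _]; [lia|].
      set (g := gq F) in *. set (Ub := ubs U F) in *.
      set (B := b (S k)) in *. set (D := Dl U g b xi (S k)) in *.
      assert (H1 : CD B (Dr B)) by (apply ex1_CD; apply (proj1 BB 0%nat)).
      assert (H2 : CD (Dr B) (Dr (Dr B))) by (apply ex1_CD; apply (proj1 BB 1%nat)).
      assert (H3 : CD (Dr (Dr B)) (Dr (Dr (Dr B)))) by (apply ex1_CD; apply (proj1 BB 2%nat)).
      assert (E1 : Dr (fun x => B x + D x) = fun x => Dr B x + (-2 * Dr B x - 2 * g x * D x)).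
      { apply CD_Drf. cd_tac. }
      assert (E2 : Dr (Dr (fun x => B x + D x)) = fun x => Dr (Dr B) x +
                 (-2 * Dr (Dr B) x - 2 * ((- xi - U x - g x * g x) * D x + g x * (-2 * Dr B x - 2 * g x * D x)))).
      { rewrite E1. apply CD_Drf. eapply CD_ext. cd_tac. intros x; cbv beta; ring. }
      set (H := fun x => 2 * (b (S (S k)) x + Dl U g b xi (S (S k)) x) + (1/2) * Dr (Dr (fun x => B x + D x)) x
                  + 2 * (Ub x * (B x + D x))).
      assert (HH : CD H (fun y => Dr Ub y * (B y + D y))).
      { unfold H. rewrite E2. rewrite (Dl_S U g b xi (S k)). fold D. fold B.
        rewrite (CD_Drf _ _ HUb). eapply CD_ext. cd_tac.
        intros x. unfold Ub. cbv beta. unfold M0. rewrite (ubs_eq U F xi) by auto. fold g. field. }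
      assert (GH : Good H).
      { unfold H. apply Good_plus. apply Good_plus.
        apply Good_scal. apply Good_plus; auto.
        apply Good_scal. apply Good_Dr. rewrite E1. apply Good_plus; auto.
        apply Good_minus. apply Good_scal; auto. apply Good_mult; auto. apply Bd_scal; auto.
        apply Good_scal. apply Good_mult_r; auto. apply Bd_plus; auto. apply Good_Bd; auto. }
      assert (HP : forall x, PI (fun y => Dr Ub y * (B y + D y)) x = H x).
      { apply PI_eq; auto. apply ex1_mult. apply (Sm_Dr _ (proj1 GUb) 0%nat).
        apply ex1_plus. apply (proj1 BB 0%nat). apply (proj1 GD 0%nat). apply Good_t0; auto. }
      rewrite (Hbbr k) by lia. rewrite IHi. apply functional_extensionality; intros x.
      rewrite HP. unfold H. rewrite E2, (Dl_S U g b xi (S k)). fold D. fold B. field.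
Qed.
Lemma csum_ext m F G : (forall i, (i < m)%nat -> F i = G i) -> csum m F = csum m G.
Proof. induction m; intros H; simpl; auto. rewrite IHm, H; auto. Qed.

Lemma csum_plus m F G : csum m (fun i => F i + G i) = csum m F + csum m G.
Proof. induction m; simpl. ring. rewrite IHm. ring. Qed.

Lemma csum_minus m F G : csum m (fun i => F i - G i) = csum m F - csum m G.
Proof. induction m; simpl. ring. rewrite IHm. ring. Qed.

Lemma csum_scal m c F : csum m (fun i => c * F i) = c * csum m F.
Proof. induction m; simpl. ring. rewrite IHm. ring. Qed.

Lemma csum_zero m : csum m (fun _ => 0) = 0.
Proof. induction m; simpl; auto. rewrite IHm; ring. Qed.

Lemma cpow_S_sub lam m i : (i <= m)%nat -> cpow lam (S m - i) = lam * cpow lam (m - i).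
Proof. intros H. replace (S m - i)%nat with (S (m - i)) by lia. reflexivity. Qed.

Lemma csum_shift c m (E : nat -> C) :
  csum (S m) (fun i => cpow c (S m - i) * E i) = c * csum (S m) (fun i => cpow c (m - i) * E i).
Proof.
  rewrite <- csum_scal. apply csum_ext. intros i Hi. rewrite cpow_S_sub by lia. ring.
Qed.

Lemma iterD_app s f : iterD (s ++ false :: nil)%list f = iterD s (dx f).
Proof. induction s; simpl; auto. rewrite IHs. reflexivity. Qed.

Lemma telescope lam (D : nat -> C) m :
  csum (S m) (fun i => cpow lam (m - i) * (lam * D i - D (S i))) = cpow lam (S m) * D 0%nat - D (S m).
Proof.
  induction m.
  - simpl. ring.
  - change (csum (S (S m)) (fun i => cpow lam (S m - i) * (lam * D i - D (S i))))
      with (csum (S m) (fun i => cpow lam (S m - i) * (lam * D i - D (S i)))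
            + cpow lam (S m - S m) * (lam * D (S m) - D (S (S m)))).
    rewrite (csum_shift lam m (fun i => lam * D i - D (S i))), IHm. rewrite Nat.sub_diag. simpl. ring.
Qed.

Lemma CD_csum m (T T' : nat -> R -> C) : (forall i, (i < m)%nat -> CD (T i) (T' i)) ->
  CD (fun x => csum m (fun i => T i x)) (fun x => csum m (fun i => T' i x)).
Proof.
  induction m; intros H; simpl. apply CD_const.
  apply CD_plus. apply IHm; intros; apply H; lia. apply H; lia.
Qed.

Lemma Dl_sum U g b xi m : forall x, Dl U g b xi (S m) x =
  - csum (S m) (fun i => cpow xi (m - i) *
      ((- xi - U x - g x * g x) * b i x + g x * Dr (b i) x - (1/2) * Dr (Dr (b i)) x)).
Proof.
  induction m; intros x.
  - simpl. ring.
  - rewrite Dl_S. rewrite IHm.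
    change (csum (S (S m)) ?F) with (csum (S m) F + F (S m)).
    rewrite (csum_shift xi m (fun i =>
      ((- xi - U x - g x * g x) * b i x + g x * Dr (b i) x - (1/2) * Dr (Dr (b i)) x))). rewrite Nat.sub_diag. simpl cpow. ring.
Qed.

Lemma loc2d_all (P : R -> R -> Prop) x y : (forall u v, P u v) -> locally_2d P x y.
Proof. intros H. exists (mkposreal 1 Rlt_0_1). intros; apply H. Qed.

Lemma schwarz f : smooth f -> forall x t, dt (dx f) x t = dx (dt f) x t.
Proof.
  intros Hs x t. unfold dt, dx, Dr. simpl. f_equal.
  - symmetry. apply (Schwarz (fun a b => fst (f a b)) x t).
    + apply loc2d_all. intros a b. repeat split.
      * apply (Hs nil a b).
      * apply (Hs nil a b).
      * apply (Hs (true :: nil) a b).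
      * apply (Hs (false :: nil) a b).
    + apply continuity_2d_pt_ext with (fun a b => fst (iterD (false :: true :: nil) f a b)).
      intros; reflexivity. apply (Hs (false :: true :: nil) x t).
    + apply continuity_2d_pt_ext with (fun a b => fst (iterD (true :: false :: nil) f a b)).
      intros; reflexivity. apply (Hs (true :: false :: nil) x t).
  - symmetry. apply (Schwarz (fun a b => snd (f a b)) x t).
    + apply loc2d_all. intros a b. repeat split.
      * apply (Hs nil a b).
      * apply (Hs nil a b).
      * apply (Hs (true :: nil) a b).
      * apply (Hs (false :: nil) a b).
    + apply continuity_2d_pt_ext with (fun a b => snd (iterD (false :: true :: nil) f a b)).
      intros; reflexivity. apply (Hs (false :: true :: nil) x t).
    + apply continuity_2d_pt_ext with (fun a b => snd (iterD (true :: false :: nil) f a b)).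
      intros; reflexivity. apply (Hs (true :: false :: nil) x t).
Qed.

Definition ts (f : fn) (x : R) : R -> C := fun s => f x s.

Lemma ts_CD f x : smooth f -> CD (ts f x) (ts (dt f) x).
Proof.
  intros Hs. apply CD_ext with (Dr (ts f x)). apply ex1_CD.
  intros s; destruct (Hs nil x s) as [_ [_ [A [B _]]]]; split; auto.
  intros s; reflexivity.
Qed.

Lemma smooth_dx f : smooth f -> smooth (dx f).
Proof. intros H s. pose proof (H (s ++ false :: nil)%list) as K. rewrite iterD_app in K. exact K. Qed.
Lemma csum_lin2 m (a b : nat -> C) k1 k2 :
  csum m (fun i => a i * k1 - k2 * b i) = csum m a * k1 - k2 * csum m b.
Proof. induction m; simpl. ring. rewrite IHm. ring. Qed.

Lemma csum_lin4 m (a b d e : nat -> C) c k1 k2 :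
  csum m (fun j => a j + b j - c * (d j * k1 - k2 * e j)) =
  csum m a + csum m b - c * (csum m d * k1 - k2 * csum m e).
Proof. induction m; simpl. ring. rewrite IHm. ring. Qed.

Lemma csum_zero' m (F : nat -> C) : (forall i, (i < m)%nat -> F i = 0) -> csum m F = 0.
Proof. intros H. rewrite (csum_ext m F (fun _ => 0)) by auto. apply csum_zero. Qed.

Lemma PI_PhiF U F xi Ph lj : Good F -> Good Ph -> Sm U ->
  (forall x, Dr (Dr F) x + (xi + U x) * F x = 0) ->
  (forall x, Dr (Dr Ph) x + (lj + U x) * Ph x = 0) -> lj <> xi ->
  forall x, PI (fun y => Ph y * F y) x = (Ph x * Dr F x - Dr Ph x * F x) / (lj - xi).
Proof.
  intros GF GP SU FS PS Hne. apply PI_eq.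
  - assert (H1 : CD F (Dr F)) by (apply ex1_CD; apply (proj1 GF 0%nat)).
    assert (H2 : CD Ph (Dr Ph)) by (apply ex1_CD; apply (proj1 GP 0%nat)).
    assert (H3 : CD (Dr F) (fun x => - (xi + U x) * F x)).
    { eapply CD_ext. apply ex1_CD; apply (proj1 GF 1%nat). intros x. specialize (FS x).
      rewrite <- (Cplus_0_l (- (xi + U x) * F x)). rewrite <- FS. ring. }
    assert (H4 : CD (Dr Ph) (fun x => - (lj + U x) * Ph x)).
    { eapply CD_ext. apply ex1_CD; apply (proj1 GP 1%nat). intros x. specialize (PS x).
      rewrite <- (Cplus_0_l (- (lj + U x) * Ph x)). rewrite <- PS. ring. }
    unfold Cdiv. eapply CD_ext. cd_tac. intros x; cbv beta. field.
    intro E; apply Hne. replace lj with ((lj - xi) + xi) by ring. rewrite E. ring.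
  - apply ex1_mult. apply (proj1 GP 0%nat). apply (proj1 GF 0%nat).
  - apply Good_t0. unfold Cdiv. apply Good_mult_r. apply Good_minus.
    apply Good_mult_r; auto. apply Good_Bd, Good_Dr; auto.
    apply Good_mult_r; auto. apply Good_Dr; auto. apply Good_Bd; auto. apply Bd_const.
Qed.
Lemma CD_Dr2 h c : Sm h -> (forall x, Dr (Dr h) x + (c x) * h x = 0) -> CD (Dr h) (fun x => - c x * h x).
Proof.
  intros S E. eapply CD_ext. apply ex1_CD; apply (S 1%nat). intros x. specialize (E x).
  rewrite <- (Cplus_0_l (- c x * h x)). rewrite <- E. ring.
Qed.

Lemma Dl_sum2 U g b xi n x : Dl U g b xi (n + 2) x =
  - csum (n + 2) (fun i => cpow xi (n + 1 - i) *
      ((- xi - U x - g x * g x) * b i x + g x * Dr (b i) x - (1/2) * Dr (Dr (b i)) x)).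
Proof. replace (n + 2)%nat with (S (n + 1)) by lia. apply Dl_sum. Qed.

Lemma alg_kdv (B2 S1 S2 S3 S4 SA SB SE DL Fx F1 gx alpha eta : C) :
  Fx <> 0 -> gx = F1 / Fx -> SA * Fx - F1 * SB = Fx * Fx * SE -> DL = - SE ->
  S1 + S2 - (2 * gx / (Fx * Fx)) * (S3 * Fx - F1 * S4) = 0 ->
  - (-2 * B2 - 2 * alpha * S1) - 2 * (((SA + eta * F1 + alpha * S3) * / Fx + F1 * (- (SB + eta * Fx + alpha * S4) / (Fx * Fx))) * gx
      + gx * ((SA + eta * F1 + alpha * S3) * / Fx + F1 * (- (SB + eta * Fx + alpha * S4) / (Fx * Fx))))
  = -2 * (B2 + (-2 * B2 - 2 * gx * DL)) - 2 * alpha * S2.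
Proof.
  intros HF Hg K1 KD KS.
  replace SA with ((SA * Fx - F1 * SB + F1 * SB) / Fx) by (field; auto). rewrite K1.
  replace S1 with ((S1 + S2 - (2 * gx / (Fx * Fx)) * (S3 * Fx - F1 * S4)) - S2 + (2 * gx / (Fx * Fx)) * (S3 * Fx - F1 * S4)) by ring.
  rewrite KS. subst DL gx. field; auto.
Qed.

Lemma kdv_slice n N U F xi alpha eta (b : nat -> R -> C) (Ph : nat -> R -> C) (lj rr : nat -> C) (x : R) :
  Good U -> Good F -> (forall x, F x <> 0) -> (forall x, Dr (Dr F) x + (xi + U x) * F x = 0) ->
  PIconv (fun y => Dr (ubs U F) y * 1) -> BF n U b -> b 0%nat = (fun _ => 0) ->
  (forall j, (j < N)%nat -> Good (Ph j) /\ (forall x, Dr (Dr (Ph j)) x + (lj j + U x) * Ph j x = 0)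
      /\ lj j <> xi /\ rr j * rr j = lj j - xi) ->
  let Qf := fun x => csum (n + 2) (fun i => (- (1/2) * Dr (b i) x * F x + b i x * Dr F x) * cpow xi (n + 1 - i))
        + eta * F x + alpha * csum N (fun j => Ph j x * PI (fun y => Ph j y * F y) x) in
  let gt := Dr Qf x * / F x + Dr F x * (- Qf x / (F x * F x)) in
  - Dr (fun x => -2 * b (n + 2)%nat x - 2 * alpha * csum N (fun j => Ph j x * Ph j x)) x
    - 2 * (gt * gq F x + gq F x * gt)
  = Dr (fun x => -2 * (b (n + 2)%nat x + Dl U (gq F) b xi (n + 2) x)
                 - 2 * alpha * csum N (fun j => / rr j * (Dr (Ph j) x - gq F x * Ph j x) *
                                               (/ rr j * (Dr (Ph j) x - gq F x * Ph j x)))) x.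
Proof.
  intros GU GF Fnz FS Hc HBF Hb0 HPh Qf gt.
  pose proof (g_CD U F xi (proj1 GF) Fnz FS) as Hg.
  pose proof (g_Bd U F xi GU (proj1 GF) Fnz FS Hc) as Bg.
  pose proof (gp_Good U F xi GU (proj1 GF) Fnz FS Hc) as Ggp.
  pose proof (Dl_facts n U (gq F) b xi GU Hg Bg Ggp HBF Hb0) as HDl.
  assert (HU : CD U (Dr U)) by (apply ex1_CD; apply (proj1 GU 0%nat)).
  assert (HF1 : CD F (Dr F)) by (apply ex1_CD; apply (proj1 GF 0%nat)).
  assert (HF2 : CD (Dr F) (fun x => - (xi + U x) * F x)) by (apply CD_Dr2; auto; apply GF).
  assert (HB : forall i, (i <= n + 2)%nat -> CD (b i) (Dr (b i)) /\ CD (Dr (b i)) (Dr (Dr (b i)))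
              /\ CD (Dr (Dr (b i))) (Dr (Dr (Dr (b i))))).
  { intros i Hi. destruct (HBF i Hi) as [[BB _] _].
    split; [|split]; apply ex1_CD; [apply (proj1 BB 0%nat)|apply (proj1 BB 1%nat)|apply (proj1 BB 2%nat)]. }
  set (g := gq F) in *.
  assert (EQf : Qf = fun x => csum (n + 2) (fun i => (- (1/2) * Dr (b i) x * F x + b i x * Dr F x) * cpow xi (n + 1 - i))
        + eta * F x + alpha * csum N (fun j => Ph j x * ((Ph j x * Dr F x - Dr (Ph j) x * F x) / (lj j - xi)))).
  { unfold Qf. apply functional_extensionality; intros y. f_equal. f_equal.
    apply csum_ext. intros j Hj. destruct (HPh j Hj) as [GP [PS [Hne _]]].
    rewrite (PI_PhiF U F xi (Ph j) (lj j)); auto. apply GU. }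
  assert (CQ : exists DQ, CD Qf DQ /\ forall y, DQ y =
      csum (n + 2) (fun i => (- (1/2) * Dr (Dr (b i)) y * F y + - (1/2) * Dr (b i) y * Dr F y
                             + (Dr (b i) y * Dr F y + b i y * (- (xi + U y) * F y))) * cpow xi (n + 1 - i))
      + eta * Dr F y + alpha * csum N (fun j => Dr (Ph j) y * ((Ph j y * Dr F y - Dr (Ph j) y * F y) / (lj j - xi))
                                            + Ph j y * (Ph j y * F y))).
  { eexists. split. rewrite EQf.
    apply CD_plus. apply CD_plus.
    - apply CD_csum. intros i Hi. destruct (HB i) as [B1 [B2 B3]]; [lia|]. cd_tac.
    - cd_tac.
    - apply CD_mult. apply CD_const. apply CD_csum. intros j Hj. destruct (HPh j Hj) as [GP [PS [Hne _]]].
      assert (P1 : CD (Ph j) (Dr (Ph j))) by (apply ex1_CD; apply (proj1 GP 0%nat)).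
      assert (P2 : CD (Dr (Ph j)) (fun x => - (lj j + U x) * Ph j x)) by (apply CD_Dr2; auto; apply GP).
      unfold Cdiv. cd_tac.
    - intros y. cbv beta. rewrite !Cmult_0_l.
      rewrite (csum_ext (n + 2) _ (fun i => (- (1/2) * Dr (Dr (b i)) y * F y + - (1/2) * Dr (b i) y * Dr F y
                             + (Dr (b i) y * Dr F y + b i y * (- (xi + U y) * F y))) * cpow xi (n + 1 - i))).
      2:{ intros i Hi. ring. }
      rewrite (csum_ext N _ (fun j => Dr (Ph j) y * ((Ph j y * Dr F y - Dr (Ph j) y * F y) / (lj j - xi))
                                            + Ph j y * (Ph j y * F y))).
      2:{ intros j Hj. destruct (HPh j Hj) as [GP [PS [Hne _]]]. field.
          intro E; apply Hne. replace (lj j) with ((lj j - xi) + xi) by ring. rewrite E. ring. }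
      ring. }
  destruct CQ as [DQ [CQ EDQ]].
  assert (CL : CD (fun x => -2 * b (n + 2)%nat x - 2 * alpha * csum N (fun j => Ph j x * Ph j x))
                  (fun x => -2 * Dr (b (n + 2)%nat) x - 2 * alpha * csum N (fun j => Dr (Ph j) x * Ph j x + Ph j x * Dr (Ph j) x))).
  { destruct (HB (n + 2)%nat) as [B1 _]; [lia|].
    eapply CD_ext. apply CD_minus. cd_tac. apply CD_mult. cd_tac. apply CD_csum. intros j Hj.
    destruct (HPh j Hj) as [GP _]. assert (P1 : CD (Ph j) (Dr (Ph j))) by (apply ex1_CD; apply (proj1 GP 0%nat)).
    cd_tac. intros y; cbv beta. ring. }
  assert (CR : CD (fun x => -2 * (b (n + 2)%nat x + Dl U g b xi (n + 2) x)
                 - 2 * alpha * csum N (fun j => / rr j * (Dr (Ph j) x - g x * Ph j x) *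
                                               (/ rr j * (Dr (Ph j) x - g x * Ph j x))))
      (fun x => -2 * (Dr (b (n + 2)%nat) x + (-2 * Dr (b (n + 2)%nat) x - 2 * g x * Dl U g b xi (n + 2) x))
                 - 2 * alpha * csum N (fun j => 2 * (/ rr j * (Dr (Ph j) x - g x * Ph j x)) *
                      (/ rr j * (- (lj j + U x) * Ph j x - ((- xi - U x - g x * g x) * Ph j x + g x * Dr (Ph j) x)))))).
  { destruct (HB (n + 2)%nat) as [B1 _]; [lia|]. destruct (HDl (n + 2)%nat) as [_ D1]; [lia|].
    eapply CD_ext. apply CD_minus. cd_tac. apply CD_mult. cd_tac.
    apply (CD_csum N (fun j x => / rr j * (Dr (Ph j) x - g x * Ph j x) * (/ rr j * (Dr (Ph j) x - g x * Ph j x)))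
       (fun j x => 2 * (/ rr j * (Dr (Ph j) x - g x * Ph j x)) *
                      (/ rr j * (- (lj j + U x) * Ph j x - ((- xi - U x - g x * g x) * Ph j x + g x * Dr (Ph j) x))))).
    intros j Hj.
    destruct (HPh j Hj) as [GP [PS _]]. assert (P1 : CD (Ph j) (Dr (Ph j))) by (apply ex1_CD; apply (proj1 GP 0%nat)).
    assert (P2 : CD (Dr (Ph j)) (fun x => - (lj j + U x) * Ph j x)) by (apply CD_Dr2; auto; apply GP).
    eapply CD_ext. cd_tac. intros y; cbv beta. ring.
    intros y; cbv beta. ring. }
  unfold gt. rewrite (CD_Dr _ _ CQ x), EDQ, (CD_Dr _ _ CL x), (CD_Dr _ _ CR x).
  rewrite EQf. cbv beta.
  eapply alg_kdv. apply Fnz. reflexivity.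
  2:{ apply Dl_sum2. }
  - rewrite <- csum_lin2. rewrite <- csum_scal. apply csum_ext. intros i Hi. unfold g, gq. field. apply Fnz.
  - rewrite <- csum_lin4. apply csum_zero'. intros j Hj.
    destruct (HPh j Hj) as [GP [PS [Hne Hrr]]].
    assert (Elj : lj j = rr j * rr j + xi) by (rewrite Hrr; ring).
    assert (Hr0 : rr j <> 0) by (intro E; apply Hne; rewrite Elj, E; ring).
    assert (Hq : rr j * rr j + xi - xi <> 0).
    { replace (rr j * rr j + xi - xi) with (rr j * rr j) by ring. apply Cmult_neq_0; auto. }
    rewrite Elj. unfold g, gq. field. repeat split; auto.
Qed.
Lemma telescope2 lam (D : nat -> C) n :
  csum (n + 2) (fun i => cpow lam (n + 1 - i) * (lam * D i - D (S i))) = cpow lam (n + 2) * D 0%nat - D (n + 2)%nat.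
Proof. replace (n + 2)%nat with (S (n + 1)) by lia. apply telescope. Qed.

Lemma csum_lin3 m (a b c : nat -> C) k :
  csum m (fun i => a i - k * b i - c i) = csum m a - k * csum m b - csum m c.
Proof. induction m; simpl. ring. rewrite IHm. ring. Qed.

Lemma csum_lin5 m (a b d e f : nat -> C) k c k1 k2 :
  csum m (fun j => a j - k * b j - c * (d j * k1 - k2 * e j) - f j) =
  csum m a - k * csum m b - c * (csum m d * k1 - k2 * csum m e) - csum m f.
Proof. induction m; simpl. ring. rewrite IHm. ring. Qed.

Lemma Ceq_sub (a b c : C) : a - b = c -> b = a - c.
Proof. intros H; rewrite <- H; ring. Qed.

Lemma alg_psi (SAp SBp SAb S3p S4p S5 SA SB S3 S4 SE DL Px P1 psb gx Fx F1 eta alpha : C) :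
  Fx <> 0 -> gx = F1 / Fx -> psb = P1 - gx * Px ->
  SAp - gx * SBp - SAb = - DL * Px -> SA * Fx - F1 * SB = Fx * Fx * SE -> DL = - SE ->
  S3p - gx * S4p - (Px / (Fx * Fx)) * (S3 * Fx - F1 * S4) - S5 = 0 ->
  (SAp + eta * P1 + alpha * S3p) - (((SA + eta * F1 + alpha * S3) * / Fx + F1 * (- (SB + eta * Fx + alpha * S4) / (Fx * Fx))) * Px
     + gx * (SBp + eta * Px + alpha * S4p)) = SAb + eta * psb + alpha * S5.
Proof.
  intros HF Hg Hp T1 T2 KD T3.
  rewrite (Ceq_sub _ _ _ T1), (Ceq_sub _ _ _ T3).
  replace SA with ((SA * Fx - F1 * SB + F1 * SB) / Fx) by (field; auto). rewrite T2.
  subst DL psb gx. field; auto.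
Qed.
Lemma Wrel_lem U Ph Ps lj lam : Good U -> Good Ph -> Good Ps ->
  (forall x, Dr (Dr Ph) x + (lj + U x) * Ph x = 0) -> (forall x, Dr (Dr Ps) x + (lam + U x) * Ps x = 0) ->
  PIconv (fun y => Ph y * Ps y) ->
  forall y, (lj - lam) * PI (fun y => Ph y * Ps y) y = Ph y * Dr Ps y - Dr Ph y * Ps y.
Proof.
  intros GU GP GS PS SS Hc y.
  assert (H1 : CD Ph (Dr Ph)) by (apply ex1_CD; apply (proj1 GP 0%nat)).
  assert (H2 : CD (Dr Ph) (fun x => - (lj + U x) * Ph x)) by (apply CD_Dr2; auto; apply GP).
  assert (H3 : CD Ps (Dr Ps)) by (apply ex1_CD; apply (proj1 GS 0%nat)).
  assert (H4 : CD (Dr Ps) (fun x => - (lam + U x) * Ps x)) by (apply CD_Dr2; auto; apply GS).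
  assert (Hex : ex1 (fun y => Ph y * Ps y)) by (apply ex1_mult; [apply (proj1 GP 0%nat)|apply (proj1 GS 0%nat)]).
  assert (H5 : CD (PI (fun y => Ph y * Ps y)) (fun y => Ph y * Ps y)) by (apply PI_CD; auto).
  set (K := fun y => (lj - lam) * PI (fun y => Ph y * Ps y) y - (Ph y * Dr Ps y - Dr Ph y * Ps y)).
  assert (CK : CD K (fun _ => 0)).
  { unfold K. eapply CD_ext. cd_tac. intros x; cbv beta. ring. }
  assert (TK : t0 K).
  { unfold K. unfold Cminus. apply t0_plus. apply t0_mult. apply bnd_const. apply PI_t0; auto.
    apply t0_opp. apply t0_plus. apply t0_mult_r. apply (Good_t0 _ GP). apply (Bd_bnd _ (Good_Bd _ (Good_Dr _ GS))).
    apply t0_opp. apply t0_mult_r. apply (Good_t0 _ (Good_Dr _ GP)). apply (Bd_bnd _ (Good_Bd _ GS)). }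
  assert (E1 : PI (fun _ => 0) y = K y) by (apply (PI_eq (fun _ => 0) K); auto; apply (CD_ex1 _ _ (CD_const 0))).
  assert (E2 : PI (fun _ => 0) y = 0) by (apply (PI_eq (fun _ => 0) (fun _ => 0)); [apply CD_const|apply (CD_ex1 _ _ (CD_const 0))|apply t0_zero]).
  rewrite E1 in E2. unfold K in E2. apply (Ceq_sub _ _ _) in E2. rewrite E2. ring.
Qed.
Lemma psi_slice n N U F xi alpha eta lam (b bb : nat -> R -> C) (Ph : nat -> R -> C) (lj rr : nat -> C)
  (Ps : R -> C) (x : R) :
  Good U -> Good F -> (forall x, F x <> 0) -> (forall x, Dr (Dr F) x + (xi + U x) * F x = 0) ->
  PIconv (fun y => Dr (ubs U F) y * 1) -> BF n U b -> b 0%nat = (fun _ => 0) ->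
  (forall j, (j < N)%nat -> Good (Ph j) /\ (forall x, Dr (Dr (Ph j)) x + (lj j + U x) * Ph j x = 0)
      /\ lj j <> xi /\ rr j * rr j = lj j - xi) ->
  Good Ps -> (forall x, Dr (Dr Ps) x + (lam + U x) * Ps x = 0) ->
  (forall j, (j < N)%nat -> PIconv (fun y => Ph j y * Ps y)) ->
  (forall i, (i <= n + 2)%nat -> bb i = fun x => b i x + Dl U (gq F) b xi i x) ->
  let Qf := fun x => csum (n + 2) (fun i => (- (1/2) * Dr (b i) x * F x + b i x * Dr F x) * cpow xi (n + 1 - i))
        + eta * F x + alpha * csum N (fun j => Ph j x * PI (fun y => Ph j y * F y) x) in
  let Qp := fun x => csum (n + 2) (fun i => (- (1/2) * Dr (b i) x * Ps x + b i x * Dr Ps x) * cpow lam (n + 1 - i))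
        + eta * Ps x + alpha * csum N (fun j => Ph j x * PI (fun y => Ph j y * Ps y) x) in
  let psb := fun x => Dr Ps x - gq F x * Ps x in
  let phb := fun j x => / rr j * (Dr (Ph j) x - gq F x * Ph j x) in
  Dr Qp x - ((Dr Qf x * / F x + Dr F x * (- Qf x / (F x * F x))) * Ps x + gq F x * Qp x)
  = csum (n + 2) (fun i => (- (1/2) * Dr (bb i) x * psb x + bb i x * Dr psb x) * cpow lam (n + 1 - i))
    + eta * psb x + alpha * csum N (fun j => phb j x * PI (fun y => phb j y * psb y) x).
Proof.
  intros GU GF Fnz FS Hc HBF Hb0 HPh GS SS HcP Hbb Qf Qp psb phb.
  pose proof (g_CD U F xi (proj1 GF) Fnz FS) as Hg.
  pose proof (g_Bd U F xi GU (proj1 GF) Fnz FS Hc) as Bg.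
  pose proof (gp_Good U F xi GU (proj1 GF) Fnz FS Hc) as Ggp.
  pose proof (Dl_facts n U (gq F) b xi GU Hg Bg Ggp HBF Hb0) as HDl.
  assert (HU : CD U (Dr U)) by (apply ex1_CD; apply (proj1 GU 0%nat)).
  assert (HF1 : CD F (Dr F)) by (apply ex1_CD; apply (proj1 GF 0%nat)).
  assert (HF2 : CD (Dr F) (fun x => - (xi + U x) * F x)) by (apply CD_Dr2; auto; apply GF).
  assert (HS1 : CD Ps (Dr Ps)) by (apply ex1_CD; apply (proj1 GS 0%nat)).
  assert (HS2 : CD (Dr Ps) (fun x => - (lam + U x) * Ps x)) by (apply CD_Dr2; auto; apply GS).
  assert (HB : forall i, (i <= n + 2)%nat -> CD (b i) (Dr (b i)) /\ CD (Dr (b i)) (Dr (Dr (b i)))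
              /\ CD (Dr (Dr (b i))) (Dr (Dr (Dr (b i))))).
  { intros i Hi. destruct (HBF i Hi) as [[BB _] _].
    split; [|split]; apply ex1_CD; [apply (proj1 BB 0%nat)|apply (proj1 BB 1%nat)|apply (proj1 BB 2%nat)]. }
  assert (HP : forall j, (j < N)%nat ->
     CD (PI (fun y => Ph j y * Ps y)) (fun y => Ph j y * Ps y) /\ t0 (PI (fun y => Ph j y * Ps y)) /\
     forall y, (lj j - lam) * PI (fun y => Ph j y * Ps y) y = Ph j y * Dr Ps y - Dr (Ph j) y * Ps y).
  { intros j Hj. destruct (HPh j Hj) as [GP [PS _]].
    assert (Hex : ex1 (fun y => Ph j y * Ps y)) by (apply ex1_mult; [apply (proj1 GP 0%nat)|apply (proj1 GS 0%nat)]).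
    split. apply PI_CD; auto. split. apply PI_t0; auto. apply (Wrel_lem U); auto. }
  set (g := gq F) in *.
  assert (EQf : Qf = fun x => csum (n + 2) (fun i => (- (1/2) * Dr (b i) x * F x + b i x * Dr F x) * cpow xi (n + 1 - i))
        + eta * F x + alpha * csum N (fun j => Ph j x * ((Ph j x * Dr F x - Dr (Ph j) x * F x) / (lj j - xi)))).
  { unfold Qf. apply functional_extensionality; intros y. f_equal. f_equal.
    apply csum_ext. intros j Hj. destruct (HPh j Hj) as [GP [PS [Hne _]]].
    rewrite (PI_PhiF U F xi (Ph j) (lj j)); auto. apply GU. }
  assert (CQ : exists DQ, CD Qf DQ /\ forall y, DQ y =
      csum (n + 2) (fun i => (- (1/2) * Dr (Dr (b i)) y * F y + - (1/2) * Dr (b i) y * Dr F y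
                             + (Dr (b i) y * Dr F y + b i y * (- (xi + U y) * F y))) * cpow xi (n + 1 - i))
      + eta * Dr F y + alpha * csum N (fun j => Dr (Ph j) y * ((Ph j y * Dr F y - Dr (Ph j) y * F y) / (lj j - xi))
                                            + Ph j y * (Ph j y * F y))).
  { eexists. split. rewrite EQf.
    apply CD_plus. apply CD_plus.
    - apply CD_csum. intros i Hi. destruct (HB i) as [B1 [B2 B3]]; [lia|]. cd_tac.
    - cd_tac.
    - apply CD_mult. apply CD_const. apply CD_csum. intros j Hj. destruct (HPh j Hj) as [GP [PS [Hne _]]].
      assert (P1 : CD (Ph j) (Dr (Ph j))) by (apply ex1_CD; apply (proj1 GP 0%nat)).
      assert (P2 : CD (Dr (Ph j)) (fun x => - (lj j + U x) * Ph j x)) by (apply CD_Dr2; auto; apply GP).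
      unfold Cdiv. cd_tac.
    - intros y. cbv beta. rewrite !Cmult_0_l.
      rewrite (csum_ext (n + 2) _ (fun i => (- (1/2) * Dr (Dr (b i)) y * F y + - (1/2) * Dr (b i) y * Dr F y
                             + (Dr (b i) y * Dr F y + b i y * (- (xi + U y) * F y))) * cpow xi (n + 1 - i))).
      2:{ intros i Hi. ring. }
      rewrite (csum_ext N _ (fun j => Dr (Ph j) y * ((Ph j y * Dr F y - Dr (Ph j) y * F y) / (lj j - xi))
                                            + Ph j y * (Ph j y * F y))).
      2:{ intros j Hj. destruct (HPh j Hj) as [GP [PS [Hne _]]]. field.
          intro E; apply Hne. replace (lj j) with ((lj j - xi) + xi) by ring. rewrite E. ring. }
      ring. }
  destruct CQ as [DQ [CQ EDQ]].
  assert (CQp : CD Qp (fun y =>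
      csum (n + 2) (fun i => (- (1/2) * Dr (Dr (b i)) y * Ps y + - (1/2) * Dr (b i) y * Dr Ps y
                             + (Dr (b i) y * Dr Ps y + b i y * (- (lam + U y) * Ps y))) * cpow lam (n + 1 - i))
      + eta * Dr Ps y + alpha * csum N (fun j => Dr (Ph j) y * PI (fun y => Ph j y * Ps y) y + Ph j y * (Ph j y * Ps y)))).
  { unfold Qp. eapply CD_ext. apply CD_plus. apply CD_plus.
    - apply (CD_csum (n + 2) (fun i y => (- (1/2) * Dr (b i) y * Ps y + b i y * Dr Ps y) * cpow lam (n + 1 - i))
        (fun i y => (- (1/2) * Dr (Dr (b i)) y * Ps y + - (1/2) * Dr (b i) y * Dr Ps y
                             + (Dr (b i) y * Dr Ps y + b i y * (- (lam + U y) * Ps y))) * cpow lam (n + 1 - i))).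
      intros i Hi. destruct (HB i) as [B1 [B2 B3]]; [lia|]. eapply CD_ext. cd_tac. intros y; cbv beta; ring.
    - cd_tac.
    - apply CD_mult. apply CD_const.
      apply (CD_csum N (fun j y => Ph j y * PI (fun y => Ph j y * Ps y) y)
         (fun j y => Dr (Ph j) y * PI (fun y => Ph j y * Ps y) y + Ph j y * (Ph j y * Ps y))).
      intros j Hj. destruct (HPh j Hj) as [GP _]. destruct (HP j Hj) as [CP _].
      assert (P1 : CD (Ph j) (Dr (Ph j))) by (apply ex1_CD; apply (proj1 GP 0%nat)).
      cd_tac.
    - intros y; cbv beta. ring. }
  assert (Cpsb : CD psb (fun y => - (lam + U y) * Ps y - ((- xi - U y - g y * g y) * Ps y + g y * Dr Ps y))).
  { unfold psb. eapply CD_ext. cd_tac. intros y; cbv beta. ring. }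
  assert (HPb : forall j, (j < N)%nat -> PI (fun y => phb j y * psb y) x =
              / rr j * (Ph j x * psb x + (lam - xi) * PI (fun y => Ph j y * Ps y) x)).
  { intros j Hj. destruct (HPh j Hj) as [GP [PS [Hne Hrr]]]. destruct (HP j Hj) as [CP [TP _]].
    assert (P1 : CD (Ph j) (Dr (Ph j))) by (apply ex1_CD; apply (proj1 GP 0%nat)).
    assert (P2 : CD (Dr (Ph j)) (fun x => - (lj j + U x) * Ph j x)) by (apply CD_Dr2; auto; apply GP).
    assert (Elj : lj j = rr j * rr j + xi) by (rewrite Hrr; ring).
    assert (Hr0 : rr j <> 0) by (intro E; apply Hne; rewrite Elj, E; ring).
    assert (Gpsb : Good psb).
    { unfold psb. apply Good_minus. apply Good_Dr; auto. apply Good_mult; auto. }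
    apply (PI_eq _ (fun y => / rr j * (Ph j y * psb y + (lam - xi) * PI (fun y => Ph j y * Ps y) y))).
    - eapply CD_ext. cd_tac. intros y; cbv beta. unfold phb, psb. field. auto.
    - unfold phb. apply ex1_mult. apply ex1_mult. apply (CD_ex1 _ _ (CD_const _)).
      apply (proj1 (Good_minus _ _ (Good_Dr _ GP) (Good_mult _ _ Bg GP)) 0%nat).
      apply (proj1 Gpsb 0%nat).
    - apply t0_mult. apply bnd_const. apply t0_plus. apply t0_mult_r. apply (Good_t0 _ GP).
      apply (Bd_bnd _ (Good_Bd _ Gpsb)). apply t0_mult. apply bnd_const. auto. }
  rewrite (csum_ext (n + 2) _ (fun i => (- (1/2) * (Dr (b i) x + (-2 * Dr (b i) x - 2 * g x * Dl U g b xi i x)) * psb x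
        + (b i x + Dl U g b xi i x) * Dr psb x) * cpow lam (n + 1 - i))).
  2:{ intros i Hi. rewrite (Hbb i) by lia. destruct (HB i) as [B1 _]; [lia|]. destruct (HDl i) as [_ D1]; [lia|].
      rewrite (CD_Dr (fun y => b i y + Dl U g b xi i y) _ (CD_plus _ _ _ _ B1 D1)). reflexivity. }
  rewrite (csum_ext N _ (fun j => phb j x * (/ rr j * (Ph j x * psb x + (lam - xi) * PI (fun y => Ph j y * Ps y) x)))).
  2:{ intros j Hj. rewrite HPb; auto. }
  rewrite (CD_Dr _ _ CQp x), (CD_Dr _ _ CQ x), EDQ, (CD_Dr _ _ Cpsb x).
  unfold Qp. rewrite EQf. cbv beta.
  eapply (alg_psi _ _ _ _ _ _ _ _ _ _
     (csum (n + 2) (fun i => cpow xi (n + 1 - i) *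
      ((- xi - U x - g x * g x) * b i x + g x * Dr (b i) x - (1/2) * Dr (Dr (b i)) x)))
     (Dl U g b xi (n + 2) x)).
  - apply Fnz.
  - reflexivity.
  - reflexivity.
  - rewrite <- csum_lin3.
    transitivity (csum (n + 2) (fun i => cpow lam (n + 1 - i) * (lam * Dl U g b xi i x - Dl U g b xi (S i) x)) * Ps x).
    + rewrite (Cmult_comm (csum _ _) (Ps x)), <- csum_scal. apply csum_ext. intros i Hi. rewrite (Dl_S U g b xi i). cbv beta.
      unfold psb. field.
    + rewrite telescope2. simpl Dl. ring.
  - rewrite <- csum_lin2. rewrite <- csum_scal. apply csum_ext. intros i Hi. unfold g, gq. field. apply Fnz.
  - apply Dl_sum2.
  - rewrite <- csum_lin5. apply csum_zero'. intros j Hj.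
    destruct (HPh j Hj) as [GP [PS [Hne Hrr]]]. destruct (HP j Hj) as [_ [_ WR]].
    assert (Elj : lj j = rr j * rr j + xi) by (rewrite Hrr; ring).
    assert (Hr0 : rr j <> 0) by (intro E; apply Hne; rewrite Elj, E; ring).
    assert (Hq : rr j * rr j + xi - xi <> 0).
    { replace (rr j * rr j + xi - xi) with (rr j * rr j) by ring. apply Cmult_neq_0; auto. }
    transitivity ((Dr (Ph j) x - g x * Ph j x) / (rr j * rr j) *
       ((lj j - lam) * PI (fun y => Ph j y * Ps y) x - (Ph j x * Dr Ps x - Dr (Ph j) x * Ps x))).
    + unfold phb, psb, g, gq. rewrite Elj. field. repeat split; auto.
    + rewrite WR. ring.
Qed.
Lemma schr_bar U F xi lam P c : Sm U -> Sm F -> (forall x, F x <> 0) ->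
  (forall x, Dr (Dr F) x + (xi + U x) * F x = 0) -> Sm P ->
  (forall x, Dr (Dr P) x + (lam + U x) * P x = 0) ->
  forall x, Dr (Dr (fun x => c * (Dr P x - gq F x * P x))) x + (lam + ubs U F x) * (c * (Dr P x - gq F x * P x)) = 0.
Proof.
  intros SU SF Fnz FS SP PS x.
  pose proof (g_CD U F xi SF Fnz FS) as Hg.
  assert (HU : CD U (Dr U)) by (apply ex1_CD; apply (SU 0%nat)).
  assert (H1 : CD P (Dr P)) by (apply ex1_CD; apply (SP 0%nat)).
  assert (H2 : CD (Dr P) (fun x => - (lam + U x) * P x)) by (apply CD_Dr2; auto).
  assert (E1 : Dr (fun x => c * (Dr P x - gq F x * P x)) =
     fun x => c * (- (lam + U x) * P x - ((- xi - U x - gq F x * gq F x) * P x + gq F x * Dr P x))).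
  { apply CD_Drf. eapply CD_ext. cd_tac. intros y; cbv beta; ring. }
  rewrite E1. rewrite (CD_Dr _ (fun x => c * ((- (0 + Dr U x) * P x + - (lam + U x) * Dr P x) -
       ((((0 - Dr U x) - ((- xi - U x - gq F x * gq F x) * gq F x + gq F x * (- xi - U x - gq F x * gq F x))) * P x
         + (- xi - U x - gq F x * gq F x) * Dr P x) + ((- xi - U x - gq F x * gq F x) * Dr P x + gq F x * (- (lam + U x) * P x)))))).
  2:{ eapply CD_ext. cd_tac. intros y; cbv beta; ring. }
  rewrite (ubs_eq U F xi) by auto. ring.
Qed.

Lemma schr_bar1 U F xi lam P : Sm U -> Sm F -> (forall x, F x <> 0) ->
  (forall x, Dr (Dr F) x + (xi + U x) * F x = 0) -> Sm P ->
  (forall x, Dr (Dr P) x + (lam + U x) * P x = 0) ->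
  forall x, Dr (Dr (fun x => Dr P x - gq F x * P x)) x + (lam + ubs U F x) * (Dr P x - gq F x * P x) = 0.
Proof.
  intros. pose proof (schr_bar U F xi lam P 1 H H0 H1 H2 H3 H4 x) as K.
  replace (fun x => 1 * (Dr P x - gq F x * P x)) with (fun x => Dr P x - gq F x * P x) in K.
  rewrite Cmult_1_l in K. exact K.
  apply functional_extensionality; intros; ring.
Qed.
Lemma tsCD f x : smooth f -> CD (fun s => f x s) (fun s => dt f x s).
Proof. intros H. exact (ts_CD f x H). Qed.

Lemma dt_dbar f1 psi : smooth f1 -> smooth psi -> (forall x t, f1 x t <> 0) -> forall x t,
  dt (dbar f1 psi) x t = dt (dx psi) x t - ((dt (dx f1) x t * / f1 x t + dx f1 x t * (- dt f1 x t / (f1 x t * f1 x t))) * psi x t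
     + (dx f1 x t / f1 x t) * dt psi x t).
Proof.
  intros Hf Hp Hnz x t. unfold dt at 1.
  pose proof (tsCD (dx psi) x (smooth_dx _ Hp)) as H1.
  pose proof (tsCD (dx f1) x (smooth_dx _ Hf)) as H2.
  pose proof (tsCD f1 x Hf) as H3.
  pose proof (tsCD psi x Hp) as H5.
  assert (H4 : CD (fun s => / f1 x s) (fun s => - dt f1 x s / (f1 x s * f1 x s))) by (apply CD_inv; auto).
  assert (HC : CD (fun s => dx psi x s - dx f1 x s * / f1 x s * psi x s) ltac:(cd_tac)) by cd_tac.
  unfold dbar. unfold Cdiv. rewrite (CD_Dr _ _ HC t). unfold Cdiv. ring.
Qed.

Lemma dt_ubar u f1 xi1 : smooth u -> smooth f1 -> (forall x t, f1 x t <> 0) ->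
  (forall x t, dx (dx f1) x t + (xi1 + u x t) * f1 x t = 0) -> forall x t,
  dt (ubar u f1) x t = - dt u x t - 2 * ((dt (dx f1) x t * / f1 x t + dx f1 x t * (- dt f1 x t / (f1 x t * f1 x t))) * (dx f1 x t / f1 x t)
     + (dx f1 x t / f1 x t) * (dt (dx f1) x t * / f1 x t + dx f1 x t * (- dt f1 x t / (f1 x t * f1 x t)))).
Proof.
  intros Hu Hf Hnz FS x t. unfold dt at 1.
  replace (fun s => ubar u f1 x s) with (fun s => - u x s - 2 * xi1 - 2 * ((dx f1 x s * / f1 x s) * (dx f1 x s * / f1 x s))).
  2:{ apply functional_extensionality; intros s.
      change (ubar u f1 x s) with (ubs (sl u s) (sl f1 s) x).
      rewrite (ubs_eq (sl u s) (sl f1 s) xi1 (smooth_Sm f1 s Hf) (fun y => Hnz y s) (fun y => FS y s)).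
      reflexivity. }
  pose proof (tsCD (dx f1) x (smooth_dx _ Hf)) as H2.
  pose proof (tsCD f1 x Hf) as H3.
  pose proof (tsCD u x Hu) as H5.
  assert (H4 : CD (fun s => / f1 x s) (fun s => - dt f1 x s / (f1 x s * f1 x s))) by (apply CD_inv; auto).
  assert (HC : CD (fun s => - u x s - 2 * xi1 - 2 * ((dx f1 x s * / f1 x s) * (dx f1 x s * / f1 x s))) ltac:(cd_tac)) by cd_tac.
  rewrite (CD_Dr _ _ HC t). unfold Cdiv. ring.
Qed.
Lemma funext2 (f g : fn) : (forall x t, f x t = g x t) -> f = g.
Proof. intros H. apply functional_extensionality; intros x. apply functional_extensionality; intros t. apply H. Qed.

Theorem proposition4p1
  (n N : nat) (alpha eta xi1 : C) (lams : nat -> C) (r : nat -> C)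
  (u f1 : fn) (phi : nat -> fn)
  (Hdist : forall i j, (i < N)%nat -> (j < N)%nat -> i <> j -> lams i <> lams j)
  (Hne : forall j, (j < N)%nat -> lams j <> xi1)
  (Hr : forall j, (j < N)%nat -> r j * r j = lams j - xi1)
  (Hu : smooth u) (Hud : decays u)
  (Hphi : forall j, (j < N)%nat -> smooth (phi j) /\ decays (phi j))
  (Hf1 : smooth f1) (Hf1d : decays f1)
  (Hf1nz : forall x t, f1 x t <> 0)
  (Hcu : forall k, (k <= n + 1)%nat -> pinv_conv (fun y s => dx u y s * bseq u k y s))
  (Hcub : forall k, (k <= n + 1)%nat ->
     pinv_conv (fun y s => dx (ubar u f1) y s * bseq (ubar u f1) k y s))
  (Hcf : forall j, (j < N)%nat -> pinv_conv (fun y s => phi j y s * f1 y s))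
  (Hkdv : KdVSCS n N alpha lams u phi)
  (Hlax1 : LaxPair n N alpha eta u phi xi1 f1) :
  (forall (lam : C) (psi : fn),
     smooth psi -> decays psi ->
     (forall j, (j < N)%nat -> pinv_conv (fun y s => phi j y s * psi y s)) ->
     (forall j, (j < N)%nat ->
        pinv_conv (fun y s => phibar f1 r phi j y s * dbar f1 psi y s)) ->
     LaxPair n N alpha eta u phi lam psi ->
     LaxPair n N alpha eta (ubar u f1) (phibar f1 r phi) lam (dbar f1 psi))
  /\ KdVSCS n N alpha lams (ubar u f1) (phibar f1 r phi).
Proof.
  destruct Hkdv as [Hut Hphis].
  destruct Hlax1 as [Hf1s Hf1t].
  assert (SL : forall t,
     Good (sl u t) /\ Good (sl f1 t) /\ (forall x, sl f1 t x <> 0) /\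
     (forall x, Dr (Dr (sl f1 t)) x + (xi1 + sl u t x) * sl f1 t x = 0) /\
     PIconv (fun y => Dr (ubs (sl u t) (sl f1 t)) y * 1) /\
     BF n (sl u t) (fun i => sl (bseq u i) t) /\
     (forall i, (i <= n + 2)%nat -> sl (bseq (ubar u f1) i) t =
         fun x => sl (bseq u i) t x + Dl (sl u t) (gq (sl f1 t)) (fun i => sl (bseq u i) t) xi1 i x) /\
     (forall j, (j < N)%nat -> Good (sl (phi j) t) /\
         (forall x, Dr (Dr (sl (phi j) t)) x + (lams j + sl u t x) * sl (phi j) t x = 0) /\
         lams j <> xi1 /\ r j * r j = lams j - xi1)).
  { intros t.
    assert (GU : Good (sl u t)) by (apply decays_Good; auto).
    assert (GF : Good (sl f1 t)) by (apply decays_Good; auto).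
    assert (Fnz : forall x, sl f1 t x <> 0) by (intros; apply Hf1nz).
    assert (FS : forall x, Dr (Dr (sl f1 t)) x + (xi1 + sl u t x) * sl f1 t x = 0) by (intros x; apply (Hf1s x t)).
    assert (Hc : PIconv (fun y => Dr (ubs (sl u t) (sl f1 t)) y * 1)) by (intros x; exact (Hcub 1%nat ltac:(lia) x t)).
    assert (HBF : BF n (sl u t) (fun i => sl (bseq u i) t)).
    { intros i Hi. exact (bfacts n (sl u t) (fun i => sl (bseq u i) t) GU eq_refl eq_refl
         (fun k Hk => eq_refl) (fun k Hk x => Hcu k Hk x t) i Hi). }
    split; [auto|]. split; [auto|]. split; [auto|]. split; [auto|]. split; [auto|]. split; [auto|]. split.
    - intros i Hi. exact (bbar_eq n (sl u t) (sl f1 t) xi1 (fun i => sl (bseq u i) t) (fun i => sl (bseq (ubar u f1) i) t)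
         GU (proj1 GF) Fnz FS Hc HBF eq_refl eq_refl eq_refl eq_refl (fun k Hk => eq_refl) i Hi).
    - intros j Hj. destruct (Hphi j Hj) as [S1 D1]. split. apply decays_Good; auto.
      split. intros x; apply (Hphis j Hj x t). split; auto. }
  split.
  - intros lam psi Hps Hpd Hpc Hpbc [Hpsis Hpsit]. split.
    + intros x t. destruct (SL t) as [GU [GF [Fnz [FS _]]]].
      exact (schr_bar1 (sl u t) (sl f1 t) xi1 lam (sl psi t) (proj1 GU) (proj1 GF) Fnz FS (smooth_Sm psi t Hps)
                (fun y => Hpsis y t) x).
    + intros x t. destruct (SL t) as [GU [GF [Fnz [FS [Hc [HBF [Hbb HPh]]]]]]].
      rewrite (dt_dbar f1 psi Hf1 Hps Hf1nz x t).
      rewrite (schwarz psi Hps x t), (schwarz f1 Hf1 x t).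
      replace (dt psi) with (Qop n N alpha eta u phi lam psi) by (symmetry; apply funext2; auto).
      replace (dt f1) with (Qop n N alpha eta u phi xi1 f1) by (symmetry; apply funext2; auto).
      exact (psi_slice n N (sl u t) (sl f1 t) xi1 alpha eta lam (fun i => sl (bseq u i) t)
               (fun i => sl (bseq (ubar u f1) i) t) (fun j => sl (phi j) t) lams r (sl psi t) x
               GU GF Fnz FS Hc HBF eq_refl HPh (decays_Good psi t Hps Hpd) (fun y => Hpsis y t)
               (fun j Hj y => Hpc j Hj y t) Hbb).
  - split.
    + intros x t. destruct (SL t) as [GU [GF [Fnz [FS [Hc [HBF [Hbb HPh]]]]]]].
      rewrite (dt_ubar u f1 xi1 Hu Hf1 Hf1nz Hf1s x t).
      rewrite (Hut x t), (schwarz f1 Hf1 x t).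
      replace (dt f1) with (Qop n N alpha eta u phi xi1 f1) by (symmetry; apply funext2; auto).
      change (dx (fun y s => -2 * bseq (ubar u f1) (n + 2) y s
                - 2 * alpha * csum N (fun j => phibar f1 r phi j y s * phibar f1 r phi j y s)) x t)
        with (Dr (fun y => -2 * sl (bseq (ubar u f1) (n + 2)) t y
                - 2 * alpha * csum N (fun j => / r j * (Dr (sl (phi j) t) y - gq (sl f1 t) y * sl (phi j) t y)
                      * (/ r j * (Dr (sl (phi j) t) y - gq (sl f1 t) y * sl (phi j) t y)))) x).
      rewrite (Hbb (n + 2)%nat) by lia.
      exact (kdv_slice n N (sl u t) (sl f1 t) xi1 alpha eta (fun i => sl (bseq u i) t)
               (fun j => sl (phi j) t) lams r x GU GF Fnz FS Hc HBF eq_refl HPh).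
    + intros j Hj x t. destruct (SL t) as [GU [GF [Fnz [FS [Hc [HBF [Hbb HPh]]]]]]].
      destruct (HPh j Hj) as [GP [PS _]].
      exact (schr_bar (sl u t) (sl f1 t) xi1 (lams j) (sl (phi j) t) (/ r j) (proj1 GU) (proj1 GF) Fnz FS
               (proj1 GP) PS x).
Qed.
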